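(* Let $q>0$, $a:[0,\infty)\to[0,\infty)$ continuous and $r:[0,\infty)\to[0,q]$ with $q=\sup_{t\ge0}r(t)$, and assume: (A1) the zero solution of $x'(t)=-a(t)x(t-r(t))$ is uniformly asymptotically stable; (A2) $a_0:=\sup_{t\ge0}|a(t)|<\infty$; (A3) $r$ is uniformly continuous on $[0,\infty)$. Let $K>0,\sigma>0$ be constants such that $|U(t;s,\phi)|\le K\|\phi\|_q e^{-\sigma(t-s)}$ for all $t\ge s\ge0$ and $\phi\in C([-q,0],\mathbb R)$. Set $t_0:=3q+w_r(q)$ and, for $h=q/k$ ($k\ge1$ an integer), $K_1(h):=a_0^2\,[2h+w_r(h)]\,K$; then $K_1(h)\to0$ as $h\to0$. Moreover, there is a constant $M_1>0$, independent of $h$ and $\varphi$, such that for every $h=q/k$ with $K_1(h)<\sigma$ there exists $\eta=\eta(h)>0$ such that for every $\varphi\in C([-q,0],\mathbb R)$ $$|x(\varphi)(t)-z_h(\varphi)(t)|\le\Big[K\,\|E_{h,t_0}\|_q+K_1(h)\,M_1\,\|\varphi\|_q\,t\Big]e^{-\eta(t-t_0)}\qquad\text{for all } t\ge t_0 .$$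
   Context: $C([-q,0],\mathbb R)$ carries the sup norm $\|\phi\|_q=\sup_{-q\le\theta\le0}|\phi(\theta)|$. $U(t;s,\phi)$ denotes the value at time $t$ of the unique solution of $x'(t)=-a(t)x(t-r(t))$ with initial segment $x_s=\phi$ at time $s$ (where $x_s(\theta)=x(s+\theta)$, $-q\le\theta\le0$). $x(\varphi)$ is the solution of $x'(t)=-a(t)x(t-r(t))$, $t\ge0$, with $x(t)=\varphi(t)$ on $[-q,0]$. For $h=q/k$ and $k_i:=\lfloor r(ih)/h\rfloor$, $z_h(\varphi)$ is the solution of $z_h'(t)=-a(t)z_h((i-k_i)h)$ on $[ih,(i+1)h)$, $i\ge0$, continuous on $[0,\infty)$, with $z_h(nh)=\varphi(nh)$ for $n=-k,\dots,0$. $E_h:=x(\varphi)-z_h(\varphi)$ on $[0,\infty)$, and $\|E_{h,t_0}\|_q=\sup_{t_0-q\le s\le t_0}|E_h(s)|$. The global modulus of continuity is $w_r(\ell)=\sup\{|r(t_2)-r(t_1)|:\ t_1,t_2\ge0,\ |t_2-t_1|\le\ell\}$. *)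

(* Defs.v *)
From Stdlib Require Export Reals Lra ClassicalEpsilon.
Open Scope R_scope.

(* least upper bound of a set of reals (well specified whenever the set is
   nonempty and bounded above; chosen by Hilbert's epsilon). *)
Definition lub_of (E : R -> Prop) : R := epsilon (inhabits 0) (is_lub E).

Definition sup_on (f : R -> R) (lo hi : R) : R :=
  lub_of (fun y => exists s, lo <= s <= hi /\ y = Rabs (f s)).

Definition normq (q : R) (phi : R -> R) : R := sup_on phi (- q) 0.

Definition cont_on_q (q : R) (phi : R -> R) : Prop :=
  forall th, - q <= th <= 0 -> continue_in phi (fun u => - q <= u <= 0) th.

Definition is_sol (a r : R -> R) (q s : R) (phi x : R -> R) : Prop :=
  (forall th, - q <= th <= 0 -> x (s + th) = phi th) /\
  continue_in x (fun u => s <= u) s /\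
  (forall t, s < t -> derivable_pt_lim x t (- (a t * x (t - r t)))).

Definition UAS (a r : R -> R) (q : R) : Prop :=
  (forall eps, 0 < eps -> exists delta, 0 < delta /\
     forall s phi x, 0 <= s -> cont_on_q q phi -> normq q phi < delta ->
       is_sol a r q s phi x -> forall t, s <= t -> Rabs (x t) < eps) /\
  (exists delta0, 0 < delta0 /\ forall eps, 0 < eps -> exists T, 0 < T /\
     forall s phi x, 0 <= s -> cont_on_q q phi -> normq q phi < delta0 ->
       is_sol a r q s phi x -> forall t, s + T <= t -> Rabs (x t) < eps).

Definition w_mod (r : R -> R) (l : R) : R :=
  lub_of (fun y => exists t1 t2, 0 <= t1 /\ 0 <= t2 /\ Rabs (t2 - t1) <= l /\
                                 y = Rabs (r t2 - r t1)).

Definition a0_of (a : R -> R) : R :=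
  lub_of (fun y => exists t, 0 <= t /\ y = Rabs (a t)).

Definition K1 (a r : R -> R) (K h : R) : R :=
  (a0_of a) ^ 2 * (2 * h + w_mod r h) * K.

Definition is_scheme (a r : R -> R) (q : R) (k : nat) (phi z : R -> R) : Prop :=
  let h := q / INR k in
  (forall n : nat, (n <= k)%nat -> z (- INR n * h) = phi (- INR n * h)) /\
  (forall t, 0 <= t -> continue_in z (fun u => 0 <= u) t) /\
  (forall (i : nat) t, INR i * h < t < INR (S i) * h ->
     derivable_pt_lim z t
       (- (a t * z ((INR i - IZR (Int_part (r (INR i * h) / h))) * h)))).

(* Main.v *)
Require Import Defs.
From Stdlib Require Import Reals.
From Stdlib Require Import Lra Lia ZArith ClassicalEpsilon FunctionalExtensionality.
From Coquelicot Require Import Coquelicot.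
Open Scope R_scope.

Lemma lub_of_is_lub E : (exists x, E x) -> (exists M, forall y, E y -> y <= M) ->
  is_lub E (lub_of E).
Proof.
  intros Hne [M HM]. unfold lub_of. apply epsilon_spec.
  destruct (completeness E) as [m Hm]; [exists M; exact HM|exact Hne|].
  exists m; exact Hm.
Qed.

Lemma lub_of_ge E y M : E y -> (forall y, E y -> y <= M) -> y <= lub_of E.
Proof.
  intros Hy HM. destruct (lub_of_is_lub E) as [H1 H2]; eauto.
Qed.

Lemma lub_of_le E M : (exists x, E x) -> (forall y, E y -> y <= M) -> lub_of E <= M.
Proof.
  intros Hne HM. destruct (lub_of_is_lub E) as [H1 H2]; eauto.
Qed.

Definition clamp (lo hi v : R) := Rmax lo (Rmin hi v).

Lemma clamp_in lo hi v : lo <= hi -> lo <= clamp lo hi v <= hi.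
Proof. intros. unfold clamp, Rmax, Rmin. repeat destruct Rle_dec; lra. Qed.

Lemma clamp_id lo hi v : lo <= v <= hi -> clamp lo hi v = v.
Proof. intros. unfold clamp, Rmax, Rmin. repeat destruct Rle_dec; lra. Qed.

Lemma clamp_lip lo hi u v : lo <= hi -> Rabs (clamp lo hi u - clamp lo hi v) <= Rabs (u - v).
Proof. intros. unfold clamp, Rmax, Rmin. repeat destruct Rle_dec;
  unfold Rabs; repeat destruct Rcase_abs; lra. Qed.

Lemma clamp_cont f lo hi : lo <= hi ->
  (forall u, lo <= u <= hi -> continue_in f (fun v => lo <= v <= hi) u) ->
  forall v, continuity_pt (fun v => f (clamp lo hi v)) v.
Proof.
  intros Hle Hc v. unfold continuity_pt, continue_in, limit1_in, limit_in.
  intros eps Heps. destruct (Hc (clamp lo hi v) (clamp_in lo hi v Hle) eps Heps)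
    as [alp [Halp H]]. exists alp; split; auto.
  intros x [_ Hx]. destruct (Req_dec (clamp lo hi v) (clamp lo hi x)) as [E|E].
  { simpl. rewrite E. unfold R_dist. rewrite Rminus_diag, Rabs_R0. lra. }
  apply H. split. split; [apply clamp_in; auto| exact E].
  simpl in *. unfold R_dist in *. eapply Rle_lt_trans; [apply clamp_lip; auto| exact Hx].
Qed.

Lemma cont_max f lo hi : lo <= hi ->
  (forall u, lo <= u <= hi -> continue_in f (fun v => lo <= v <= hi) u) ->
  exists u0, lo <= u0 <= hi /\ forall u, lo <= u <= hi -> Rabs (f u) <= Rabs (f u0).
Proof.
  intros Hle Hc.
  destruct (continuity_ab_maj (fun v => Rabs (f (clamp lo hi v))) lo hi Hle) as [m [Hm Hm2]].
  { intros c _. apply (continuity_pt_comp (fun v => f (clamp lo hi v)) Rabs).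
    apply clamp_cont; auto. apply Rcontinuity_abs. }
  exists m; split; auto. intros u Hu. specialize (Hm u Hu).
  rewrite (clamp_id lo hi u Hu), (clamp_id lo hi m Hm2) in Hm. exact Hm.
Qed.

Lemma cw_mono f (D D' : R -> Prop) u : (forall v, D' v -> D v) ->
  continue_in f D u -> continue_in f D' u.
Proof.
  unfold continue_in, limit1_in, limit_in. intros HD H eps He.
  destruct (H eps He) as [a [Ha H']]. exists a; split; auto.
  intros x [[Hx1 Hx3] Hx2]. apply H'. split; auto. split; auto.
Qed.

Lemma cpt_cw f D u : continuity_pt f u -> continue_in f D u.
Proof.
  unfold continuity_pt, continue_in, limit1_in, limit_in. intros H eps He.
  destruct (H eps He) as [a [Ha H']]. exists a; split; auto.
  intros x [[Hx1 Hx3] Hx2]. apply H'. split; auto. unfold D_x, no_cond. split; auto.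
Qed.


Lemma der_cpt f u d : derivable_pt_lim f u d -> continuity_pt f u.
Proof. intro H. apply derivable_continuous_pt. exists d; exact H. Qed.

Lemma cw_interior f lo u : lo < u -> continue_in f (fun v => lo <= v) u -> continuity_pt f u.
Proof.
  unfold continuity_pt, continue_in, limit1_in, limit_in. intros Hlo H eps He.
  destruct (H eps He) as [a [Ha H']]. exists (Rmin a (u - lo)); split.
  { apply Rmin_pos; lra. }
  intros x [[_ Hx3] Hx2]. apply H'. simpl in *. unfold R_dist in *.
  assert (Rabs (x - u) < a /\ Rabs (x-u) < u - lo) as [A1 A2].
  { split; eapply Rlt_le_trans; eauto; [apply Rmin_l|apply Rmin_r]. }
  split; [split|]; auto. apply Rabs_def2 in A2. lra.
Qed.

Lemma le_eps a b : (forall eps, 0 < eps -> a <= b + eps) -> a <= b.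
Proof. intros H. destruct (Rle_dec a b); auto. specialize (H ((a-b)/2)). lra. Qed.

Lemma mvt_core f a b L : a < b ->
  (forall u, a <= u <= b -> exists d, derivable_pt_lim f u d /\ Rabs d <= L) ->
  Rabs (f b - f a) <= L * (b - a).
Proof.
  intros Hab Hd.
  assert (pr1 : forall c, a < c < b -> derivable_pt f c).
  { intros c Hc. destruct (constructive_indefinite_description _ (Hd c ltac:(lra))) as [d [Hd1 _]].
    exists d; exact Hd1. }
  assert (pr2 : forall c, a < c < b -> derivable_pt id c).
  { intros; apply derivable_pt_id. }
  destruct (MVT f id a b pr1 pr2 Hab) as [c [P HP]].
  { intros c Hc. destruct (Hd c Hc) as [d [H1 _]]. eapply der_cpt; eauto. }
  { intros c Hc. apply derivable_continuous_pt, derivable_pt_id. }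
  rewrite (derive_pt_eq_0 id c 1 (pr2 c P) (derivable_pt_lim_id c)) in HP. unfold id in HP.
  destruct (Hd c ltac:(lra)) as [d [H1 H2]].
  rewrite (derive_pt_eq_0 f c d (pr1 c P) H1) in HP.
  replace (f b - f a) with (d * (b - a)) by lra.
  rewrite Rabs_mult, (Rabs_right (b-a)) by lra. apply Rmult_le_compat_r; lra.
Qed.

Lemma mvt_bound f a b L : a <= b ->
  continue_in f (fun v => a <= v <= b) a -> continue_in f (fun v => a <= v <= b) b ->
  (forall u, a < u < b -> exists d, derivable_pt_lim f u d /\ Rabs d <= L) ->
  Rabs (f b - f a) <= L * (b - a).
Proof.
  intros Hab Ca Cb Hd. destruct (Req_dec a b) as [E|Hne].
  { subst. rewrite Rminus_diag, Rabs_R0. lra. }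
  assert (Hlt : a < b) by lra.
  assert (HL : 0 <= L).
  { destruct (Hd ((a+b)/2) ltac:(lra)) as [d [_ H]]. pose proof (Rabs_pos d); lra. }
  apply le_eps. intros eps Heps.
  destruct (Ca (eps/2) ltac:(lra)) as [d1 [Hd1 C1]].
  destruct (Cb (eps/2) ltac:(lra)) as [d2 [Hd2 C2]].
  set (d0 := Rmin d1 (Rmin d2 (b - a)) / 3).
  assert (Hd0 : 0 < d0).
  { unfold d0. assert (0 < Rmin d1 (Rmin d2 (b-a))) by (repeat apply Rmin_pos; lra). lra. }
  assert (Hd0a : d0 < d1 /\ d0 < d2 /\ 3 * d0 <= b - a).
  { unfold d0. pose proof (Rmin_l d1 (Rmin d2 (b-a))). pose proof (Rmin_r d1 (Rmin d2 (b-a))).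
    pose proof (Rmin_l d2 (b-a)). pose proof (Rmin_r d2 (b-a)). lra. }
  assert (M : Rabs (f (b - d0) - f (a + d0)) <= L * ((b - d0) - (a + d0))).
  { apply mvt_core. lra. intros u Hu. apply Hd. lra. }
  assert (E1 : Rabs (f (a + d0) - f a) < eps / 2).
  { apply C1. split. split. lra. lra. simpl. unfold R_dist.
    replace (a + d0 - a) with d0 by ring. rewrite Rabs_right; lra. }
  assert (E2 : Rabs (f (b - d0) - f b) < eps / 2).
  { apply C2. split. split. lra. lra. simpl. unfold R_dist.
    replace (b - d0 - b) with (- d0) by ring. rewrite Rabs_Ropp, Rabs_right; lra. }
  replace (f b - f a) with ((f (b - d0) - f (a + d0)) + (f (a + d0) - f a) - (f (b - d0) - f b)) by ring.
  eapply Rle_trans. apply Rabs_triang. eapply Rle_trans. apply Rplus_le_compat_r. apply Rabs_triang.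
  rewrite Rabs_Ropp.
  assert (L * (b - d0 - (a + d0)) <= L * (b - a)) by (apply Rmult_le_compat_l; lra). lra.
Qed.


Lemma no_grid m j h : 0 < h -> INR m * h < INR j * h -> INR j * h < INR (S m) * h -> False.
Proof.
  intros Hh H1 H2. apply Rmult_lt_reg_r in H1; auto. apply Rmult_lt_reg_r in H2; auto.
  apply INR_lt in H1. apply INR_lt in H2. lia.
Qed.

Lemma floor_nat x : 0 <= x -> exists i : nat, INR i <= x < INR i + 1.
Proof.
  intros Hx. destruct (base_Int_part x) as [H1 H2].
  assert (0 <= Int_part x)%Z. { apply le_IZR. assert (IZR (Int_part x) > -1) by lra.
    apply lt_IZR in H. simpl. apply IZR_le. lia. }
  exists (Z.to_nat (Int_part x)). rewrite INR_IZR_INZ, Z2Nat.id by auto. lra.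
Qed.

Lemma grid_single f h a b L : 0 < h -> a <= b ->
  (forall u, a <= u <= b -> continue_in f (fun v => a <= v <= b) u) ->
  (forall u, a < u < b -> forall j : nat, u <> INR j * h) ->
  (forall u, a < u < b -> (forall j:nat, u <> INR j * h) -> exists d, derivable_pt_lim f u d /\ Rabs d <= L) ->
  Rabs (f b - f a) <= L * (b - a).
Proof.
  intros Hh Hab Hc Hng Hd. apply mvt_bound; [lra| apply Hc; lra | apply Hc; lra |].
  intros u Hu. apply Hd; auto.
Qed.

Lemma mvt_grid f h A B L : 0 < h -> 0 <= A <= B ->
  (forall u, A <= u <= B -> continue_in f (fun v => A <= v <= B) u) ->
  (forall u, A < u < B -> (forall j:nat, u <> INR j * h) -> exists d, derivable_pt_lim f u d /\ Rabs d <= L) ->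
  Rabs (f B - f A) <= L * (B - A).
Proof.
  intros Hh HAB Hc Hd.
  assert (Sub : forall x y, A <= x -> x <= y -> y <= B ->
     (forall u, x < u < y -> forall j : nat, u <> INR j * h) ->
     Rabs (f y - f x) <= L * (y - x)).
  { intros x y H1 H2 H3 Hng. apply grid_single with h; auto.
    intros u Hu. apply cw_mono with (fun v => A <= v <= B). intros; lra. apply Hc; lra.
    intros u Hu Hj. apply Hd; auto; lra. }
  assert (Q : forall N m y, A <= INR m * h -> INR m * h <= y -> y <= B -> y <= INR (m + N) * h ->
            Rabs (f y - f (INR m * h)) <= L * (y - INR m * h)).
  { induction N as [|N IH]; intros m y H1 H2 H3 H4.
    - rewrite Nat.add_0_r in H4. assert (y = INR m * h) by lra. subst.
      rewrite !Rminus_diag, Rabs_R0. lra.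
    - destruct (Rle_dec y (INR (S m) * h)) as [Hy|Hy].
      + apply Sub; auto. intros u Hu j E. subst u. apply (no_grid m j h); lra.
      + assert (HS : INR m * h <= INR (S m) * h).
        { rewrite S_INR. nra. }
        specialize (IH (S m) y ltac:(lra) ltac:(lra) H3 ltac:(rewrite <- plus_n_Sm in H4; simpl; exact H4)).
        assert (Rabs (f (INR (S m) * h) - f (INR m * h)) <= L * (INR (S m) * h - INR m * h)).
        { apply Sub; auto; try lra. intros u Hu j E. subst u. apply (no_grid m j h); lra. }
        replace (f y - f (INR m * h)) with ((f y - f (INR (S m) * h)) + (f (INR (S m) * h) - f (INR m * h))) by ring.
        eapply Rle_trans. apply Rabs_triang. lra. }
  destruct (floor_nat (A / h)) as [i [Hi1 Hi2]]. { apply Rdiv_le_0_compat; lra. }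
  assert (G1 : INR i * h <= A). { apply Rmult_le_reg_r with (/h). apply Rinv_0_lt_compat; lra.
    rewrite Rmult_assoc, Rinv_r, Rmult_1_r by lra. exact Hi1. }
  assert (G2 : A < INR (S i) * h). { rewrite S_INR. apply Rmult_lt_reg_r with (/h). apply Rinv_0_lt_compat; lra.
    rewrite Rmult_assoc, Rinv_r, Rmult_1_r by lra. exact Hi2. }
  assert (NG : forall y, A <= y <= INR (S i) * h -> forall u, A < u < y -> forall j : nat, u <> INR j * h).
  { intros y Hy u Hu j E. subst u. apply (no_grid i j h); lra. }
  destruct (Rle_dec B (INR (S i) * h)) as [HB|HB].
  - apply Sub; try lra. apply NG; lra.
  - destruct (INR_archimed h B Hh) as [n Hn].
    assert (Rabs (f B - f (INR (S i) * h)) <= L * (B - INR (S i) * h)).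
    { apply (Q n); try lra. rewrite plus_INR. assert (0 <= INR (S i)) by apply pos_INR. nra. }
    assert (Rabs (f (INR (S i) * h) - f A) <= L * (INR (S i) * h - A)).
    { apply Sub; try lra. apply NG; lra. }
    replace (f B - f A) with ((f B - f (INR (S i) * h)) + (f (INR (S i) * h) - f A)) by ring.
    eapply Rle_trans. apply Rabs_triang. lra.
Qed.


Lemma exp_le x y : x <= y -> exp x <= exp y.
Proof. intros [H|H]. left; apply exp_increasing; auto. subst; lra. Qed.

Lemma lip_cpt f v : (forall u, Rabs (f u - f v) <= Rabs (u - v)) -> continuity_pt f v.
Proof.
  intros H. unfold continuity_pt, continue_in, limit1_in, limit_in. intros eps He.
  exists eps; split; auto. intros x [_ Hx]. simpl in *. unfold R_dist in *.
  eapply Rle_lt_trans; [apply H| exact Hx].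
Qed.

Lemma cpt_cont f v : continuity_pt f v -> continuous f v.
Proof. intro H. apply continuity_pt_filterlim. exact H. Qed.

Lemma cont_cpt f v : continuous f v -> continuity_pt f v.
Proof. intro H. apply continuity_pt_filterlim. exact H. Qed.

Definition Fi (a r g : R -> R) := fun u => a u * g (u - r u).

Lemma Fi_cpt a r g u : 0 < u -> continuity_pt a u -> continuity_pt r u ->
  (forall v, continuity_pt g v) -> continuity_pt (Fi a r g) u.
Proof.
  intros Hu Ha Hr Hg. unfold Fi.
  apply (continuity_pt_mult a (fun u => g (u - r u))); auto.
  change (fun u => g (u - r u)) with (comp g (fun u => u - r u)).
  apply continuity_pt_comp; auto.
  apply (continuity_pt_minus (fun u => u) r); auto. apply derivable_continuous_pt, derivable_pt_id.
Qed.

Lemma Fi_exRInt a r g b c : 0 < b -> 0 < c ->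
  (forall u, 0 < u -> continuity_pt a u) -> (forall u, 0 < u -> continuity_pt r u) ->
  (forall v, continuity_pt g v) -> ex_RInt (Fi a r g) b c.
Proof.
  intros Hb Hc Ha Hr Hg. apply (@ex_RInt_continuous R_CompleteNormedModule). intros z Hz. apply cpt_cont.
  assert (0 < Rmin b c) by (apply Rmin_pos; lra).
  apply Fi_cpt; auto; try apply Ha; try apply Hr; lra.
Qed.

Lemma Lim_bound (U : nat -> R) l c B n : Un_cv U l -> (forall m, (m >= n)%nat -> Rabs (U m - c) <= B) ->
  Rabs (l - c) <= B.
Proof.
  intros Hcv HB. apply le_eps. intros eps He. destruct (Hcv eps He) as [N HN].
  specialize (HN (max N n) ltac:(lia)). specialize (HB (max N n) ltac:(lia)).
  unfold R_dist in HN. replace (l - c) with ((U (max N n) - c) - (U (max N n) - l)) by ring.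
  eapply Rle_trans. apply Rabs_triang. rewrite Rabs_Ropp. lra.
Qed.

Lemma half_small C eps : 0 <= C -> 0 < eps -> exists N, forall n, (n >= N)%nat -> C * (1/2) ^ n < eps.
Proof.
  intros HC He. destruct (pow_lt_1_zero (1/2) ltac:(rewrite Rabs_right; lra) (eps / (C + 1)))
    as [N HN]. apply Rdiv_lt_0_compat; lra.
  exists N. intros n Hn. specialize (HN n Hn). rewrite Rabs_right in HN.
  2: { left; apply pow_lt; lra. }
  apply Rmult_lt_compat_r with (r := C + 1) in HN; [|lra].
  replace (eps / (C + 1) * (C + 1)) with eps in HN by (field; lra).
  pose proof (pow_lt (1/2) n ltac:(lra)). nra.
Qed.

Lemma existence (a r : R -> R) (q a0 s : R) (psi : R -> R) :
  0 < q -> 0 <= a0 -> 0 < s ->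
  (forall u, 0 < u -> continuity_pt a u) -> (forall u, 0 < u -> continuity_pt r u) ->
  (forall u, 0 <= u -> 0 <= r u <= q) -> (forall u, 0 <= u -> Rabs (a u) <= a0) ->
  cont_on_q q psi -> exists x, is_sol a r q s psi x.
Proof.
  intros Hq Ha0 Hs Hac Hrc Hr Hab Hpsi.
  set (lam := 2 * a0 + 1).
  set (Psi := fun v => psi (clamp (-q) 0 (v - s))).
  set (T := fun (g : R -> R) v => - RInt (Fi a r g) s (Rmax s v)).
  set (wt := fun v => exp (lam * Rmax 0 (v - s))).
  assert (Hwt : forall v, 1 <= wt v).
  { intro v. unfold wt. rewrite <- exp_0. apply exp_le. assert (0 <= Rmax 0 (v - s)) by apply Rmax_l.
    unfold lam. nra. }
  assert (Psi_c : forall v, continuity_pt Psi v).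
  { intro v. unfold Psi. change (fun v => psi (clamp (-q) 0 (v - s))) with
      (comp (fun w => psi (clamp (-q) 0 w)) (fun v => v - s)).
    apply continuity_pt_comp. apply (continuity_pt_minus (fun v => v) (fun _ => s)).
    apply derivable_continuous_pt, derivable_pt_id. apply continuity_pt_const. intros ? ?; auto.
    apply clamp_cont. lra. exact Hpsi. }
  destruct (cont_max psi (-q) 0 ltac:(lra) Hpsi) as [u0 [Hu0 HM]].
  set (M := Rabs (psi u0)).
  assert (Psi_b : forall v, Rabs (Psi v) <= M * wt v).
  { intro v. unfold Psi. pose proof (HM _ (clamp_in (-q) 0 (v - s) ltac:(lra))).
    pose proof (Hwt v). pose proof (Rabs_pos (psi u0)). unfold M. nra. }
  assert (I_der : forall g, (forall v, continuity_pt g v) -> forall m, 0 < m ->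
     is_derive (fun b => RInt (Fi a r g) s b) m (Fi a r g m)).
  { intros g Hg m Hm. apply (is_derive_RInt (Fi a r g) (fun b => RInt (Fi a r g) s b) s m).
    - apply (locally_interval _ m (Finite 0) p_infty); simpl; auto.
      intros y Hy _. apply (@RInt_correct R_CompleteNormedModule). apply Fi_exRInt; auto.
    - apply cpt_cont. apply Fi_cpt; auto. }
  assert (T_c : forall g, (forall v, continuity_pt g v) -> forall v, continuity_pt (T g) v).
  { intros g Hg v. unfold T.
    change (fun v => - RInt (Fi a r g) s (Rmax s v)) with
      (comp (fun m => - RInt (Fi a r g) s m) (Rmax s)).
    apply continuity_pt_comp.
    - apply lip_cpt. intro u. unfold Rmax. repeat destruct Rle_dec; unfold Rabs; repeat destruct Rcase_abs; lra.
    - apply continuity_pt_opp. apply cont_cpt. apply (@ex_derive_continuous R_AbsRing R_NormedModule). eexists.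
      apply I_der; auto. unfold Rmax; destruct Rle_dec; lra. }
  assert (T_b : forall g G, (forall v, continuity_pt g v) -> (forall v, Rabs (g v) <= G * wt v) ->
     forall v, Rabs (T g v) <= G / 2 * wt v).
  { intros g G Hg HG v. unfold T. rewrite Rabs_Ropp.
    assert (HG0 : 0 <= G). { specialize (HG s). unfold wt in HG. rewrite Rminus_diag in HG.
      rewrite Rmax_left, Rmult_0_r, exp_0 in HG by lra. pose proof (Rabs_pos (g s)); lra. }
    set (m := Rmax s v). assert (Hm : s <= m) by apply Rmax_l.
    assert (Hwm : wt v = exp (lam * (m - s))).
    { unfold wt, m, Rmax. repeat destruct Rle_dec; try lra; f_equal; f_equal; lra. }
    rewrite Hwm.
    assert (E1 : ex_RInt (Fi a r g) s m) by (apply Fi_exRInt; auto; lra).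
    eapply Rle_trans. apply abs_RInt_le; auto.
    set (h := fun u => a0 * G * exp (lam * (u - s))).
    assert (Ih : is_RInt h s m (a0 * G / lam * exp (lam * (m - s)) - a0 * G / lam * exp (lam * (s - s)))).
    { apply (is_RInt_derive (fun u => a0 * G / lam * exp (lam * (u - s))) h).
      - intros x Hx. unfold h. auto_derive; auto. replace (x + - s) with (x - s) by ring. field. unfold lam; lra.
      - intros x Hx. unfold h. apply (@ex_derive_continuous R_AbsRing R_NormedModule). auto_derive; auto. }
    eapply Rle_trans. apply (RInt_le _ h s m Hm).
    - apply (@ex_RInt_continuous R_CompleteNormedModule). intros z Hz. apply cpt_cont.
      change (fun t => Rabs (Fi a r g t)) with (comp Rabs (Fi a r g)).
      apply continuity_pt_comp. apply Fi_cpt; auto; try apply Hac; try apply Hrc;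
      unfold Rmin in Hz; destruct Rle_dec in Hz; lra. apply Rcontinuity_abs.
    - exists (a0 * G / lam * exp (lam * (m - s)) - a0 * G / lam * exp (lam * (s - s))). exact Ih.
    - intros u Hu. unfold Fi, h. rewrite Rabs_mult, Rmult_assoc. apply Rmult_le_compat; try apply Rabs_pos.
      apply Hab; lra. eapply Rle_trans. apply HG. apply Rmult_le_compat_l; auto.
      unfold wt. apply exp_le. apply Rmult_le_compat_l. unfold lam; lra.
      pose proof (Hr u ltac:(lra)). unfold Rmax; destruct Rle_dec; lra.
    - rewrite (is_RInt_unique _ _ _ _ Ih). rewrite Rminus_diag, Rmult_0_r, exp_0.
      pose proof (exp_pos (lam * (m - s))).
      assert (a0 * G / lam <= G / 2). { unfold lam. apply Rmult_le_reg_r with (2 * (2 * a0 + 1)). lra.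
        field_simplify; try lra. }
      assert (0 <= a0 * G / lam). { unfold lam. apply Rdiv_le_0_compat; nra. }
      nra. }
  assert (T_lin : forall g1 g2, (forall v, continuity_pt g1 v) -> (forall v, continuity_pt g2 v) ->
     forall v, T g1 v - T g2 v = T (fun w => g1 w - g2 w) v).
  { intros g1 g2 H1 H2 v. unfold T. set (m := Rmax s v). assert (Hm : s <= m) by apply Rmax_l.
    assert (E : RInt (fun u => Fi a r g1 u - Fi a r g2 u) s m = RInt (Fi a r g1) s m - RInt (Fi a r g2) s m).
    { apply (@RInt_minus R_CompleteNormedModule); apply Fi_exRInt; auto; lra. }
    assert (E2 : RInt (Fi a r (fun w => g1 w - g2 w)) s m = RInt (fun u => Fi a r g1 u - Fi a r g2 u) s m).
    { apply (@RInt_ext R_CompleteNormedModule). intros x _. unfold Fi. apply Rmult_minus_distr_l. }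
    rewrite E2, E. ring. }
  set (Sq := fix Sq (n : nat) : R -> R := match n with O => Psi | S n' => fun v => Psi v + T (Sq n') v end).
  assert (S_c : forall n v, continuity_pt (Sq n) v).
  { induction n; intro v. exact (Psi_c v). simpl. apply (continuity_pt_plus Psi (T (Sq n))); auto. }
  assert (D_b : forall n v, Rabs (Sq (S n) v - Sq n v) <= M * (1/2) ^ (S n) * wt v).
  { induction n; intro v.
    - simpl. replace (Psi v + T Psi v - Psi v) with (T Psi v) by ring.
      replace (M * (1/2 * 1)) with (M / 2) by field. apply T_b; auto.
    - change (Sq (S (S n)) v - Sq (S n) v) with ((Psi v + T (Sq (S n)) v) - (Psi v + T (Sq n) v)).
      replace ((Psi v + T (Sq (S n)) v) - (Psi v + T (Sq n) v)) with (T (Sq (S n)) v - T (Sq n) v) by ring.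
      rewrite T_lin by auto.
      replace (M * (1/2) ^ (S (S n))) with (M * (1/2) ^ (S n) / 2) by (simpl; field).
      apply T_b; auto. intro w. apply (continuity_pt_minus (Sq (S n)) (Sq n)); auto. }
  assert (C_b : forall n p v, Rabs (Sq (n + p)%nat v - Sq n v) <= M * ((1/2) ^ n - (1/2) ^ (n + p)) * wt v).
  { intros n p v. induction p.
    - rewrite Nat.add_0_r, !Rminus_diag, Rabs_R0. lra.
    - rewrite <- plus_n_Sm. specialize (D_b (n + p)%nat v).
      replace (Sq (S (n + p)) v - Sq n v) with ((Sq (S (n + p)) v - Sq (n+p)%nat v) + (Sq (n + p)%nat v - Sq n v)) by ring.
      eapply Rle_trans. apply Rabs_triang.
      replace ((1/2) ^ (S (n + p))) with ((1/2) ^ (n + p) / 2) in * by (simpl; field).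
      replace (M * ((1 / 2) ^ n - (1 / 2) ^ (n + p) / 2) * wt v) with
        (M * (1 / 2) ^ (n + p) / 2 * wt v + M * ((1 / 2) ^ n - (1 / 2) ^ (n + p)) * wt v) by field.
      lra. }
  assert (C_b2 : forall n m v, (n <= m)%nat -> Rabs (Sq m v - Sq n v) <= M * (1/2) ^ n * wt v).
  { intros n m v Hnm. replace m with (n + (m - n))%nat by lia. eapply Rle_trans. apply C_b.
    pose proof (pow_lt (1/2) (n + (m - n)) ltac:(lra)). pose proof (Hwt v).
    assert (0 <= M) by apply Rabs_pos.
    assert (0 <= M * (1/2) ^ (n + (m - n)) * wt v) by (repeat apply Rmult_le_pos; lra).
    replace (M * ((1 / 2) ^ n - (1 / 2) ^ (n + (m - n))) * wt v) with
      (M * (1 / 2) ^ n * wt v - M * (1/2) ^ (n + (m - n)) * wt v) by ring. lra. }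
  assert (HM0 : 0 <= M) by apply Rabs_pos.
  assert (HC : forall v, Cauchy_crit (fun n => Sq n v)).
  { intros v eps He. destruct (half_small (M * wt v) eps) as [N HN]; auto.
    pose proof (Hwt v); nra.
    exists N. intros n m Hn Hm. unfold R_dist. destruct (Nat.le_ge_cases n m) as [H|H].
    - rewrite <- Rabs_Ropp. replace (- (Sq n v - Sq m v)) with (Sq m v - Sq n v) by ring.
      eapply Rle_lt_trans. apply C_b2; auto. specialize (HN n Hn). lra.
    - eapply Rle_lt_trans. apply C_b2; auto. specialize (HN m Hm). lra. }
  set (x := fun v => proj1_sig (Rcomplete.R_complete _ (HC v))).
  assert (x_b : forall n v, Rabs (x v - Sq n v) <= M * (1/2) ^ n * wt v).
  { intros n v. unfold x. destruct (Rcomplete.R_complete _ (HC v)) as [l Hl]. simpl.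
    apply Lim_bound with (fun n => Sq n v) n; [exact Hl| intros m Hm; apply C_b2; lia]. }

  assert (wt_near : forall v w, Rabs (w - v) < 1 -> wt w <= wt v * exp lam).
  { intros v w H. unfold wt. rewrite <- exp_plus. apply exp_le. apply Rabs_def2 in H.
    assert (Rmax 0 (w - s) <= Rmax 0 (v - s) + 1).
    { unfold Rmax; repeat destruct Rle_dec; lra. } unfold lam. nra. }
  assert (x_c : forall v, continuity_pt x v).
  { intros v eps He. destruct (half_small (M * wt v * exp lam) (eps/3)) as [N HN].
    pose proof (Hwt v); pose proof (exp_pos lam); apply Rmult_le_pos; nra. lra.
    destruct (S_c N v (eps/3) ltac:(lra)) as [d [Hd H]].
    exists (Rmin d 1). split. apply Rmin_pos; lra.
    intros w [_ Hw]. simpl in *. unfold R_dist in *.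
    assert (Rabs (w - v) < d /\ Rabs (w - v) < 1) as [Hw1 Hw2].
    { split; eapply Rlt_le_trans; eauto; [apply Rmin_l|apply Rmin_r]. }
    destruct (Req_dec w v) as [E|E]. { subst. rewrite Rminus_diag, Rabs_R0. lra. }
    assert (Rabs (Sq N w - Sq N v) < eps / 3).
    { apply H. split. split. exact I. auto. exact Hw1. }
    pose proof (x_b N w). pose proof (x_b N v). pose proof (wt_near v w Hw2).
    specialize (HN N (le_n N)).
    assert (M * (1/2) ^ N * wt w <= M * (1/2)^N * (wt v * exp lam)).
    { apply Rmult_le_compat_l; auto. apply Rmult_le_pos; auto. left; apply pow_lt; lra. }
    assert (M * (1/2) ^ N * wt v <= M * (1/2)^N * (wt v * exp lam)).
    { apply Rmult_le_compat_l; auto. apply Rmult_le_pos; auto. left; apply pow_lt; lra.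
      pose proof (Hwt v). assert (1 <= exp lam). { rewrite <- exp_0. apply exp_le. unfold lam; lra. } nra. }
    replace (x w - x v) with ((x w - Sq N w) + (Sq N w - Sq N v) - (x v - Sq N v)) by ring.
    eapply Rle_lt_trans. apply Rabs_triang. eapply Rle_lt_trans. apply Rplus_le_compat_r. apply Rabs_triang.
    rewrite Rabs_Ropp.
    assert (M * (1/2) ^ N * (wt v * exp lam) < eps / 3) by (rewrite <- Rmult_assoc; lra). lra. }
  assert (x_fix : forall v, x v = Psi v + T x v).
  { intro v. assert (H0 : Rabs (x v - (Psi v + T x v)) <= 0).
    2:{ unfold Rabs in H0; destruct Rcase_abs in H0; lra. }
    apply le_eps. intros eps He. rewrite Rplus_0_l.
    destruct (half_small (M * wt v) eps) as [N HN]; auto. pose proof (Hwt v); nra.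
    specialize (HN N (le_n N)).
    replace (x v - (Psi v + T x v)) with ((x v - Sq (S N) v) + (T (Sq N) v - T x v)) by (simpl; ring).
    rewrite T_lin; auto.
    assert (Rabs (T (fun w => Sq N w - x w) v) <= M * (1/2) ^ N / 2 * wt v).
    { apply T_b. intro w. apply (continuity_pt_minus (Sq N) x); auto.
      intro w. rewrite <- Rabs_Ropp. replace (- (Sq N w - x w)) with (x w - Sq N w) by ring. apply x_b. }
    assert (H0 : Rabs (x v - Sq (S N) v) <= M * (1/2)^N/2 * wt v).
    { eapply Rle_trans; [apply x_b| simpl; right; field]. }
    assert (M * (1 / 2) ^ N / 2 * wt v = M * wt v * (1/2) ^ N / 2) by field.
    eapply Rle_trans. apply Rabs_triang. lra. }
  exists x. split; [|split].
  - intros th Hth. rewrite x_fix. unfold Psi, T.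
    replace (s + th - s) with th by ring. rewrite clamp_id by lra.
    rewrite Rmax_left by lra. rewrite (RInt_point s (Fi a r x)). simpl. unfold zero; simpl. ring.
  - apply cpt_cw. apply x_c.
  - intros t Ht. apply is_derive_Reals.
    apply (is_derive_ext_loc (fun v => psi 0 + - RInt (Fi a r x) s v)).
    + apply (locally_interval _ t (Finite s) p_infty); simpl; auto.
      intros y Hy _. rewrite (x_fix y). unfold Psi, T. rewrite Rmax_right by lra.
      f_equal. f_equal. unfold clamp, Rmin, Rmax. repeat destruct Rle_dec; lra.
    + replace (- (a t * x (t - r t))) with (plus 0 (- Fi a r x t)).
      2:{ unfold plus, Fi; simpl. ring. }
      apply (is_derive_ext (fun v => plus (psi 0) (- RInt (Fi a r x) s v))). intros; reflexivity.
      apply (is_derive_plus (fun _ => psi 0) (fun v => - RInt (Fi a r x) s v) t 0 (- Fi a r x t)).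
      * exact (@is_derive_const R_AbsRing R_NormedModule (psi 0) t).
      * apply (is_derive_opp (fun v => RInt (Fi a r x) s v)). apply I_der; auto. lra.
Qed.


Definition gp (r : R -> R) (h : R) (j : nat) := (INR j - IZR (Int_part (r (INR j * h) / h))) * h.

Lemma INR_k_pos (k : nat) : (1 <= k)%nat -> 1 <= INR k.
Proof. intro H. apply le_INR in H. simpl in H. exact H. Qed.

Lemma gp_facts r q k j : 0 < q -> (1 <= k)%nat -> (forall u, 0 <= u -> 0 <= r u <= q) ->
  INR j * (q / INR k) - r (INR j * (q / INR k)) <= gp r (q / INR k) j /\
  gp r (q / INR k) j < INR j * (q / INR k) - r (INR j * (q / INR k)) + q / INR k /\
  gp r (q / INR k) j <= INR j * (q / INR k) /\
  (gp r (q / INR k) j < 0 -> exists n, (n <= k)%nat /\ gp r (q / INR k) j = - INR n * (q / INR k)).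
Proof.
  intros Hq Hk Hr. pose proof (INR_k_pos k Hk) as Hk1.
  set (h := q / INR k). assert (Hh : 0 < h) by (unfold h; apply Rdiv_lt_0_compat; lra).
  assert (Hj : 0 <= INR j * h) by (apply Rmult_le_pos; [apply pos_INR|lra]).
  destruct (Hr _ Hj) as [Hr1 Hr2].
  set (y := r (INR j * h) / h).
  assert (Hy : 0 <= y) by (unfold y; apply Rdiv_le_0_compat; lra).
  assert (Hyk : y <= INR k).
  { unfold y. apply Rmult_le_reg_r with h; [lra|].
    replace (r (INR j * h) / h * h) with (r (INR j * h)) by (field; lra).
    replace (INR k * h) with q by (unfold h; field; lra). lra. }
  destruct (base_Int_part y) as [B1 B2].
  assert (Hkz : (0 <= Int_part y)%Z). { apply le_IZR. assert (IZR (Int_part y) > -1) by lra.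
    apply lt_IZR in H. simpl. apply IZR_le. lia. }
  assert (E : gp r h j = INR j * h - IZR (Int_part y) * h) by (unfold gp; fold y; ring).
  assert (Eyh : y * h = r (INR j * h)) by (unfold y; field; lra).
  rewrite E. split; [|split; [|split]].
  - assert (IZR (Int_part y) * h <= y * h) by (apply Rmult_le_compat_r; lra). lra.
  - assert ((y - 1) * h < IZR (Int_part y) * h) by (apply Rmult_lt_compat_r; lra). nra.
  - assert (0 <= IZR (Int_part y) * h) by (apply Rmult_le_pos; [apply IZR_le; lia|lra]). lra.
  - intro Hneg. set (kk := Z.to_nat (Int_part y)).
    assert (Ekk : IZR (Int_part y) = INR kk) by (unfold kk; rewrite INR_IZR_INZ, Z2Nat.id; auto).
    assert (Hjk : (j < kk)%nat). { apply INR_lt. rewrite <- Ekk.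
      apply Rmult_lt_reg_r with h; auto. lra. }
    assert (Hkk : (kk <= k)%nat). { apply INR_le. rewrite <- Ekk. lra. }
    exists (kk - j)%nat. split. lia. rewrite minus_INR by lia. rewrite Ekk. ring.
Qed.

Lemma zder a r q k phi z t : 0 < q -> (1 <= k)%nat -> is_scheme a r q k phi z -> 0 < t ->
  (forall j : nat, t <> INR j * (q / INR k)) ->
  exists i : nat, INR i * (q / INR k) < t < INR (S i) * (q / INR k) /\
    derivable_pt_lim z t (- (a t * z (gp r (q / INR k) i))).
Proof.
  intros Hq Hk Hs Ht Hng. destruct Hs as [_ [_ Hd]].
  pose proof (INR_k_pos k Hk) as Hk1.
  set (h := q / INR k) in *. assert (Hh : 0 < h) by (unfold h; apply Rdiv_lt_0_compat; lra).
  destruct (floor_nat (t / h)) as [i [Hi1 Hi2]]. { apply Rdiv_le_0_compat; lra. }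
  assert (G1 : INR i * h <= t). { apply Rmult_le_reg_r with (/h). apply Rinv_0_lt_compat; lra.
    rewrite Rmult_assoc, Rinv_r, Rmult_1_r by lra. exact Hi1. }
  assert (G2 : t < INR (S i) * h). { rewrite S_INR. apply Rmult_lt_reg_r with (/h). apply Rinv_0_lt_compat; lra.
    rewrite Rmult_assoc, Rinv_r, Rmult_1_r by lra. exact Hi2. }
  assert (G3 : INR i * h < t). { destruct G1 as [G1|G1]; auto. exfalso; apply (Hng i); auto. }
  exists i. split; auto. apply Hd. split; auto.
Qed.

Lemma exp_pow_INR x n : exp x ^ n = exp (INR n * x).
Proof. induction n. simpl. rewrite Rmult_0_l, exp_0. ring.
  rewrite S_INR. simpl. rewrite IHn. rewrite <- exp_plus. f_equal. ring. Qed.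

Lemma z_lip a r q k phi z a0 al be L : 0 < q -> (1 <= k)%nat ->
  (forall u, 0 <= u -> Rabs (a u) <= a0) -> is_scheme a r q k phi z -> 0 <= al <= be ->
  (forall i : nat, INR i * (q / INR k) < be -> al < INR (S i) * (q / INR k) ->
      a0 * Rabs (z (gp r (q / INR k) i)) <= L) ->
  Rabs (z be - z al) <= L * (be - al).
Proof.
  intros Hq Hk Ha Hs Hab HL. pose proof (INR_k_pos k Hk) as Hk1.
  assert (Hh : 0 < q / INR k) by (apply Rdiv_lt_0_compat; lra).
  apply mvt_grid with (q / INR k); auto.
  - intros u Hu. apply cw_mono with (fun v => 0 <= v). intros; lra.
    destruct Hs as [_ [Hc _]]. apply Hc. lra.
  - intros u Hu Hng. destruct (zder a r q k phi z u Hq Hk Hs ltac:(lra) Hng) as [i [Hi Hd]].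
    eexists; split; [exact Hd|]. rewrite Rabs_Ropp, Rabs_mult.
    eapply Rle_trans; [|apply (HL i); lra]. apply Rmult_le_compat_r. apply Rabs_pos. apply Ha; lra.
Qed.

Lemma z_grow a r q k phi z a0 Phi : 0 < q -> (1 <= k)%nat -> 0 <= a0 ->
  (forall u, 0 <= u -> 0 <= r u <= q) ->
  (forall u, 0 <= u -> Rabs (a u) <= a0) -> is_scheme a r q k phi z ->
  (forall th, - q <= th <= 0 -> Rabs (phi th) <= Phi) ->
  forall u, 0 <= u -> Rabs (z u) <= Phi * exp (a0 * (u + q / INR k)).
Proof.
  intros Hq Hk Ha0 Hr Ha Hs HPhi. pose proof (INR_k_pos k Hk) as Hk1.
  set (h := q / INR k). assert (Hh : 0 < h) by (unfold h; apply Rdiv_lt_0_compat; lra).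
  assert (Hhq : h <= q). { unfold h. apply Rmult_le_reg_r with (INR k); [lra|].
    replace (q / INR k * INR k) with q by (field; lra). nra. }
  assert (HP0 : 0 <= Phi). { pose proof (HPhi 0 ltac:(lra)). pose proof (Rabs_pos (phi 0)). lra. }
  assert (Z0 : z 0 = phi 0).
  { destruct Hs as [H0 _]. specialize (H0 O (Nat.le_0_l k)). simpl in H0.
    replace (- 0 * (q / INR k)) with 0 in H0 by ring. exact H0. }
  assert (Q : forall i : nat, forall u, 0 <= u <= INR i * h -> Rabs (z u) <= Phi * (1 + a0 * h) ^ i).
  { induction i as [|i IH]; intros u Hu.
    - simpl in Hu. assert (u = 0) by lra. subst. rewrite Z0. simpl. rewrite Rmult_1_r. apply HPhi; lra.
    - assert (Hpow : 1 <= (1 + a0 * h) ^ i). { apply pow_R1_Rle. nra. }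
      destruct (Rle_dec u (INR i * h)) as [Hu'|Hu'].
      + eapply Rle_trans. apply IH; lra. simpl.
        assert (0 <= Phi * (1 + a0 * h) ^ i * (a0 * h)) by (apply Rmult_le_pos; [apply Rmult_le_pos; lra| apply Rmult_le_pos; lra]).
        replace (Phi * ((1 + a0 * h) * (1 + a0 * h) ^ i)) with (Phi * (1 + a0 * h) ^ i + Phi * (1 + a0 * h) ^ i * (a0 * h)) by ring.
        lra.
      + assert (Hg : Rabs (z (gp r h i)) <= Phi * (1 + a0 * h) ^ i).
        { destruct (gp_facts r q k i Hq Hk Hr) as [F1 [F2 [F3 F4]]]. fold h in F1, F2, F3, F4.
          destruct (Rlt_dec (gp r h i) 0) as [Hn|Hn].
          - destruct (F4 Hn) as [n [Hn1 Hn2]]. rewrite Hn2.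
            destruct Hs as [H0 _]. specialize (H0 n Hn1). fold h in H0. rewrite H0. eapply Rle_trans. apply HPhi.
            split. 2: { assert (0 <= INR n) by apply pos_INR. fold h. nra. }
            rewrite <- Hn2. assert (0 <= INR i * h) by (apply Rmult_le_pos; [apply pos_INR|lra]).
            pose proof (Hr (INR i * h) H). lra. nra.
          - apply IH. lra. }
        assert (Hl : Rabs (z u - z (INR i * h)) <= a0 * Rabs (z (gp r h i)) * (u - INR i * h)).
        { apply (z_lip a r q k phi z a0); auto.
          split. apply Rmult_le_pos; [apply pos_INR|lra]. lra.
          intros j Hj1 Hj2. fold h in Hj1, Hj2.
          assert (j = i).
          { assert (INR j * h < INR (S i) * h) by lra.
            apply Rmult_lt_reg_r in H; auto. apply INR_lt in H.
            rewrite S_INR in Hj2. assert (INR i * h < (INR j + 1) * h) by lra.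
            apply Rmult_lt_reg_r in H0; auto. assert (INR i < INR (S j)) by (rewrite S_INR; lra).
            apply INR_lt in H1. lia. }
          subst. fold h. lra. }
        assert (Hzi : Rabs (z (INR i * h)) <= Phi * (1 + a0 * h) ^ i).
        { apply IH. split. apply Rmult_le_pos; [apply pos_INR|lra]. lra. }
        rewrite S_INR in Hu.
        assert (u - INR i * h <= h) by lra.
        assert (0 <= Rabs (z (gp r h i))) by apply Rabs_pos.
        replace (z u) with ((z u - z (INR i * h)) + z (INR i * h)) by ring.
        eapply Rle_trans. apply Rabs_triang. simpl.
        assert (a0 * Rabs (z (gp r h i)) * (u - INR i * h) <= a0 * (Phi * (1 + a0 * h) ^ i) * h).
        { apply Rmult_le_compat; try nra. }
        nra. }
  intros u Hu. destruct (floor_nat (u / h)) as [i [Hi1 Hi2]]. { apply Rdiv_le_0_compat; lra. }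
  assert (G2 : u < INR (S i) * h). { rewrite S_INR. apply Rmult_lt_reg_r with (/h). apply Rinv_0_lt_compat; lra.
    rewrite Rmult_assoc, Rinv_r, Rmult_1_r by lra. exact Hi2. }
  assert (G1 : INR i * h <= u). { apply Rmult_le_reg_r with (/h). apply Rinv_0_lt_compat; lra.
    rewrite Rmult_assoc, Rinv_r, Rmult_1_r by lra. exact Hi1. }
  eapply Rle_trans. apply (Q (S i)). lra. apply Rmult_le_compat_l; auto.
  eapply Rle_trans. apply pow_incr. split. nra. apply exp_ineq1_le.
  rewrite exp_pow_INR. apply exp_le. rewrite S_INR in *. nra.
Qed.

Lemma forcing a r q k phi z a0 wh v i Zw : 0 < q -> (1 <= k)%nat ->
  (forall u, 0 <= u -> 0 <= r u <= q) -> (forall u, 0 <= u -> Rabs (a u) <= a0) ->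
  is_scheme a r q k phi z ->
  (forall t1 t2, 0 <= t1 -> 0 <= t2 -> Rabs (t2 - t1) <= q / INR k -> Rabs (r t2 - r t1) <= wh) ->
  2 * q < v -> INR i * (q / INR k) < v < INR (S i) * (q / INR k) ->
  (forall j : nat, INR j * (q / INR k) < v -> v - q - q / INR k < INR (S j) * (q / INR k) ->
     Rabs (z (gp r (q / INR k) j)) <= Zw) ->
  Rabs (z (gp r (q / INR k) i) - z (v - r v)) <= a0 * Zw * (2 * (q / INR k) + wh).
Proof.
  intros Hq Hk Hr Ha Hs Hw Hv Hi HZ. pose proof (INR_k_pos k Hk) as Hk1.
  set (h := q / INR k) in *. assert (Hh : 0 < h) by (unfold h; apply Rdiv_lt_0_compat; lra).
  assert (Hhq : h <= q). { unfold h. apply Rmult_le_reg_r with (INR k); [lra|].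
    replace (q / INR k * INR k) with q by (field; lra). nra. }
  assert (a0pos : 0 <= a0). { pose proof (Ha 0 ltac:(lra)). pose proof (Rabs_pos (a 0)); lra. }
  destruct (gp_facts r q k i Hq Hk Hr) as [F1 [F2 [F3 _]]]. fold h in F1, F2, F3.
  set (g := gp r h i) in *. set (p := v - r v).
  assert (Hih : 0 <= INR i * h). { apply Rmult_le_pos; [apply pos_INR|lra]. }
  rewrite S_INR in Hi.
  pose proof (Hr _ Hih) as Hri. pose proof (Hr v ltac:(lra)) as Hrv.
  assert (Hrr : Rabs (r v - r (INR i * h)) <= wh).
  { apply Hw; try lra. rewrite Rabs_right; lra. }
  apply Rabs_le_between' in Hrr.
  assert (Hpg : Rabs (p - g) <= 2 * h + wh).
  { unfold p. apply Rabs_le. lra. }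
  assert (HZ0 : 0 <= Zw). { eapply Rle_trans. apply Rabs_pos. apply (HZ i); fold h; rewrite ?S_INR; lra. }
  assert (HL : forall al be, 0 <= al <= be -> be <= v -> v - q - h < al ->
     Rabs (z be - z al) <= a0 * Zw * (be - al)).
  { intros al be H1 H2 H3. apply (z_lip a r q k phi z a0); auto. intros j Hj1 Hj2. fold h in Hj1, Hj2.
    apply Rmult_le_compat_l; auto. apply HZ; fold h; lra. }
  assert (Hp0 : v - q - h < p /\ p <= v) by (unfold p; lra).
  assert (Hg0 : v - q - h < g /\ g <= v) by lra.
  destruct (Rle_dec p g) as [Hle|Hle].
  - eapply Rle_trans. apply HL; lra. apply Rmult_le_compat_l. nra.
    rewrite Rabs_left1 in Hpg by lra. lra.
  - rewrite <- Rabs_Ropp. replace (- (z g - z p)) with (z p - z g) by ring.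
    eapply Rle_trans. apply HL; lra. apply Rmult_le_compat_l. nra.
    rewrite Rabs_right in Hpg by lra. lra.
Qed.


Lemma key_ineq sg et L dl d : 0 < et < sg -> 0 < d <= dl -> 0 <= L ->
  L <= (sg - et) * exp (- sg * dl) -> exp (- sg * d) + d * L <= exp (- et * d).
Proof.
  intros He Hd HL HL2.
  assert (E : exp (- et * d) = exp (- sg * d) * exp ((sg - et) * d)) by (rewrite <- exp_plus; f_equal; ring).
  pose proof (exp_ineq1_le ((sg - et) * d)).
  assert (exp (- sg * dl) <= exp (- sg * d)) by (apply exp_le; nra).
  pose proof (exp_pos (- sg * d)).
  assert (d * L <= d * ((sg - et) * exp (- sg * d))).
  { apply Rmult_le_compat_l. lra. eapply Rle_trans. exact HL2. apply Rmult_le_compat_l; lra. }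
  rewrite E. nra.
Qed.

Lemma exp_le_inv x : 0 <= x < 1 -> exp x <= / (1 - x).
Proof.
  intros Hx. pose proof (exp_ineq1_le (- x)). pose proof (exp_pos x).
  assert (exp x * exp (- x) = 1) by (rewrite <- exp_plus; replace (x + - x) with 0 by ring; apply exp_0).
  apply Rmult_le_reg_r with (1 - x). lra. rewrite Rinv_l by lra. nra.
Qed.

Lemma params sg K1v X W q : 0 < sg -> 0 <= K1v < sg -> 0 <= X -> 0 <= W -> 0 < q ->
  exists dl et, 0 < dl /\ dl <= q / 2 /\ dl * X <= 1/2 /\ 0 < et /\ et < sg /\ et * dl <= 1/2 /\
    K1v / (1 - dl * X) * exp (et * W) <= (sg - et) * exp (- sg * dl).
Proof.
  intros Hs HK HX HW Hq.
  set (mu := (sg + K1v) / 2). set (e0 := (mu - K1v) / (3 * mu)).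
  assert (Hmu : 0 < mu) by (unfold mu; lra).
  assert (He0 : 0 < e0 <= 1/3). { unfold e0. split. apply Rdiv_lt_0_compat; unfold mu; lra.
    apply Rmult_le_reg_r with (3 * mu). lra. unfold Rdiv. rewrite Rmult_assoc, Rinv_l by lra. lra. }
  assert (He0b : K1v = mu * (1 - 3 * e0)) by (unfold e0; field; lra).
  set (dl := Rmin (q/2) (e0 / (X + sg + 1))).
  set (et := Rmin (e0 / (W + 1)) ((sg - K1v) / 2)).
  assert (Hdl : 0 < dl) by (unfold dl; apply Rmin_pos; [lra| apply Rdiv_lt_0_compat; lra]).
  assert (Hdl2 : dl * (X + sg + 1) <= e0).
  { unfold dl. apply Rle_trans with (e0 / (X + sg + 1) * (X + sg + 1)).
    apply Rmult_le_compat_r. lra. apply Rmin_r. right; field; lra. }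
  assert (Het : 0 < et) by (unfold et; apply Rmin_pos; apply Rdiv_lt_0_compat; lra).
  assert (Het2 : et * (W + 1) <= e0).
  { unfold et. apply Rle_trans with (e0 / (W + 1) * (W + 1)).
    apply Rmult_le_compat_r. lra. apply Rmin_l. right; field; lra. }
  assert (Het3 : et <= (sg - K1v) / 2) by (unfold et; apply Rmin_r).
  exists dl, et. split; [auto|split; [unfold dl; apply Rmin_l|]].
  split. nra. split. auto. split. lra. split.
  { assert (dl * sg <= e0) by nra. assert (et <= sg / 2) by lra.
    assert (et * dl <= sg / 2 * dl) by (apply Rmult_le_compat_r; lra). nra. }
  assert (A1 : dl * X <= e0) by nra. assert (A2 : sg * dl <= e0) by nra. assert (A3 : et * W <= e0) by nra.
  assert (B1 : exp (et * W) <= / (1 - e0)).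
  { eapply Rle_trans. apply exp_le_inv. nra. apply Rinv_le_contravar; nra. }
  assert (B2 : exp (sg * dl) <= / (1 - e0)).
  { eapply Rle_trans. apply exp_le_inv. nra. apply Rinv_le_contravar; nra. }
  assert (Ed : exp (- sg * dl) * exp (sg * dl) = 1) by (rewrite <- exp_plus; replace (- sg * dl + sg * dl) with 0 by ring; apply exp_0).
  pose proof (exp_pos (et * W)). pose proof (exp_pos (sg * dl)). pose proof (exp_pos (- sg * dl)).
  assert (Hsm : mu <= sg - et) by (unfold mu; lra).
  assert (T : K1v * exp (et * W) * exp (sg * dl) <= (sg - et) * (1 - dl * X)).
  { assert (I1 : exp (et * W) * (1 - e0) <= 1).
    { apply Rmult_le_reg_r with (/ (1 - e0)). apply Rinv_0_lt_compat; lra.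
      rewrite Rmult_assoc, Rinv_r, Rmult_1_l, Rmult_1_r by lra. exact B1. }
    assert (I2 : exp (sg * dl) * (1 - e0) <= 1).
    { apply Rmult_le_reg_r with (/ (1 - e0)). apply Rinv_0_lt_compat; lra.
      rewrite Rmult_assoc, Rinv_r, Rmult_1_l, Rmult_1_r by lra. exact B2. }
    assert (C3 : mu * (1 - 3 * e0) <= mu * ((1 - e0) * (1 - e0) * (1 - e0))).
    { apply Rmult_le_compat_l. lra. nra. }
    assert (C4 : (sg - et) * (1 - e0) <= (sg - et) * (1 - dl * X)) by (apply Rmult_le_compat_l; lra).
    set (E1 := exp (et * W)) in *. set (E2 := exp (sg * dl)) in *.
    assert (K1v * E1 * E2 * ((1 - e0) * (1 - e0)) <= K1v) .
    { replace (K1v * E1 * E2 * ((1 - e0) * (1 - e0))) with (K1v * ((E1 * (1 - e0)) * (E2 * (1 - e0)))) by ring.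
      rewrite <- (Rmult_1_r K1v) at 2. apply Rmult_le_compat_l. lra.
      rewrite <- (Rmult_1_r 1). apply Rmult_le_compat; nra. }
    assert (K1v <= (sg - et) * (1 - e0) * ((1 - e0) * (1 - e0))).
    { rewrite He0b. eapply Rle_trans. exact C3.
      replace (mu * ((1 - e0) * (1 - e0) * (1 - e0))) with (mu * (1 - e0) * ((1 - e0) * (1 - e0))) by ring.
      apply Rmult_le_compat_r. nra. apply Rmult_le_compat_r; lra. }
    assert (0 < (1 - e0) * (1 - e0)) by nra.
    apply Rmult_le_reg_r with ((1 - e0) * (1 - e0)); auto. nra. }
  apply Rmult_le_reg_r with ((1 - dl * X) * exp (sg * dl)). apply Rmult_lt_0_compat; nra.
  replace (K1v / (1 - dl * X) * exp (et * W) * ((1 - dl * X) * exp (sg * dl))) with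
    (K1v * exp (et * W) * exp (sg * dl)) by (field; lra).
  replace ((sg - et) * exp (- sg * dl) * ((1 - dl * X) * exp (sg * dl))) with
    ((sg - et) * (1 - dl * X) * (exp (- sg * dl) * exp (sg * dl))) by ring.
  rewrite Ed. lra.
Qed.


Lemma cw_minus f g D u : continue_in f D u -> continue_in g D u ->
  continue_in (fun v => f v - g v) D u.
Proof. intros H1 H2. unfold continue_in. apply limit_minus; auto. Qed.

Lemma cw_plus f g D u : continue_in f D u -> continue_in g D u ->
  continue_in (fun v => f v + g v) D u.
Proof. intros H1 H2. unfold continue_in. apply limit_plus; auto. Qed.

Lemma glue0 f lo s hi : lo <= s <= hi -> (forall v, lo <= v <= s -> f v = 0) ->
  (forall u, s <= u <= hi -> continue_in f (fun v => s <= v <= hi) u) ->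
  forall u, lo <= u <= hi -> continue_in f (fun v => lo <= v <= hi) u.
Proof.
  intros Hs Hz Hc u Hu. unfold continue_in, limit1_in, limit_in. intros eps He.
  destruct (Rlt_dec u s) as [Hlt|Hge].
  - exists (s - u). split. lra. intros v [[Hv1 _] Hv2]. simpl in *. unfold R_dist in *.
    apply Rabs_def2 in Hv2. rewrite (Hz v), (Hz u) by lra. rewrite Rminus_diag, Rabs_R0. lra.
  - destruct (Hc u ltac:(lra) eps He) as [d1 [Hd1 H1]].
    destruct (Req_dec u s) as [Eu|Eu].
    + exists d1. split; auto. intros v [[Hv1 Hv3] Hv2].
      destruct (Rle_dec v s) as [Hvs|Hvs].
      * simpl. unfold R_dist. rewrite (Hz v), (Hz u) by lra. rewrite Rminus_diag, Rabs_R0. lra.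
      * apply H1. split; auto. split; auto. lra.
    + exists (Rmin d1 (u - s)). split. apply Rmin_pos; lra.
      intros v [[Hv1 Hv3] Hv2]. simpl in Hv2. unfold R_dist in Hv2.
      assert (Rabs (v - u) < d1 /\ Rabs (v - u) < u - s) as [A1 A2].
      { split; eapply Rlt_le_trans; eauto; [apply Rmin_l|apply Rmin_r]. }
      apply Rabs_def2 in A2. apply H1. split; [split|]; auto. lra.
Qed.

Lemma shift_cw f lo hi c u : continue_in f (fun v => lo <= v <= hi) (c + u) ->
  continue_in (fun th => f (c + th)) (fun th => lo - c <= th <= hi - c) u.
Proof.
  unfold continue_in, limit1_in, limit_in. intros H eps He.
  destruct (H eps He) as [d [Hd H1]]. exists d; split; auto.
  intros v [[Hv1 Hv3] Hv2]. apply H1. simpl in *. unfold R_dist in *.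
  split; [split|]. lra. intro E. apply Hv3. lra.
  replace (c + v - (c + u)) with (v - u) by ring. auto.
Qed.

Lemma ucont_cpt r u : 0 < u ->
  (forall eps, 0 < eps -> exists delta, 0 < delta /\
          forall t1 t2, 0 <= t1 -> 0 <= t2 -> Rabs (t2 - t1) < delta ->
            Rabs (r t2 - r t1) < eps) -> continuity_pt r u.
Proof.
  intros Hu H eps He. destruct (H eps He) as [d [Hd H1]].
  exists (Rmin d u). split. apply Rmin_pos; lra.
  intros v [_ Hv]. simpl in *. unfold R_dist in *.
  assert (Rabs (v - u) < d /\ Rabs (v - u) < u) as [A1 A2].
  { split; eapply Rlt_le_trans; eauto; [apply Rmin_l|apply Rmin_r]. }
  apply Rabs_def2 in A2. apply H1; lra.
Qed.

Lemma w_bound r q l t1 t2 : (forall u, 0 <= u -> 0 <= r u <= q) -> 0 <= t1 -> 0 <= t2 ->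
  Rabs (t2 - t1) <= l -> Rabs (r t2 - r t1) <= w_mod r l.
Proof.
  intros Hr H1 H2 H3. unfold w_mod. apply lub_of_ge with q.
  - exists t1, t2. repeat split; auto.
  - intros y [u1 [u2 [G1 [G2 [_ ->]]]]]. pose proof (Hr u1 G1). pose proof (Hr u2 G2).
    apply Rabs_le. lra.
Qed.

Lemma w_nonneg r q l : (forall u, 0 <= u -> 0 <= r u <= q) -> 0 <= l -> 0 <= w_mod r l.
Proof.
  intros Hr Hl. eapply Rle_trans; [|apply (w_bound r q l 0 0); auto; try lra].
  apply Rabs_pos. rewrite Rminus_diag, Rabs_R0. lra.
Qed.

Lemma w_small r q : (forall u, 0 <= u -> 0 <= r u <= q) ->
  (forall eps, 0 < eps -> exists delta, 0 < delta /\
          forall t1 t2, 0 <= t1 -> 0 <= t2 -> Rabs (t2 - t1) < delta ->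
            Rabs (r t2 - r t1) < eps) ->
  forall eps, 0 < eps -> exists d, 0 < d /\ forall l, 0 <= l < d -> w_mod r l <= eps.
Proof.
  intros Hr A3 eps He. destruct (A3 eps He) as [d [Hd H]]. exists d; split; auto.
  intros l Hl. unfold w_mod. apply lub_of_le.
  - exists (Rabs (r 0 - r 0)), 0, 0. repeat split; try lra. rewrite Rminus_diag, Rabs_R0; lra.
  - intros y [u1 [u2 [G1 [G2 [G3 ->]]]]]. left. apply H; auto. lra.
Qed.

Lemma part1 a r q K : 0 < q -> 0 <= K -> (forall u, 0 <= u -> 0 <= r u <= q) ->
  (forall eps, 0 < eps -> exists delta, 0 < delta /\
          forall t1 t2, 0 <= t1 -> 0 <= t2 -> Rabs (t2 - t1) < delta ->
            Rabs (r t2 - r t1) < eps) ->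
  Un_cv (fun k => K1 a r K (q / INR (S k))) 0.
Proof.
  intros Hq HK Hr A3 eps He. set (c := (a0_of a) ^ 2 * K).
  assert (Hc : 0 <= c) by (unfold c; apply Rmult_le_pos; [apply pow2_ge_0|lra]).
  destruct (w_small r q Hr A3 (eps / (2 * (c + 1)))) as [d [Hd Hw]].
  { apply Rdiv_lt_0_compat; lra. }
  set (e1 := Rmin (d / 2) (eps / (4 * (c + 1)))).
  assert (He1 : 0 < e1) by (unfold e1; apply Rmin_pos; apply Rdiv_lt_0_compat; lra).
  destruct (INR_archimed e1 q He1) as [N HN].
  exists N. intros n Hn. unfold R_dist. rewrite Rminus_0_r.
  set (h := q / INR (S n)).
  assert (HSn : INR N <= INR (S n)) by (apply le_INR; lia).
  assert (Hh0 : 0 < h) by (unfold h; apply Rdiv_lt_0_compat; [lra| apply lt_0_INR; lia]).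
  assert (Hh1 : h < e1).
  { unfold h. apply Rmult_lt_reg_r with (INR (S n)). apply lt_0_INR; lia.
    replace (q / INR (S n) * INR (S n)) with q by (field; apply not_0_INR; lia). nra. }
  assert (Hh2 : h < d) by (assert (e1 <= d / 2) by apply Rmin_l; lra).
  assert (Hh3 : 2 * h <= eps / (2 * (c + 1))).
  { assert (e1 <= eps / (4 * (c + 1))) by apply Rmin_r.
    replace (eps / (4 * (c + 1))) with (eps / (2 * (c + 1)) / 2) in H by (field; lra). lra. }
  assert (Hwh : w_mod r h <= eps / (2 * (c + 1))) by (apply Hw; lra).
  pose proof (w_nonneg r q h Hr ltac:(lra)).
  unfold K1. replace ((a0_of a) ^ 2 * (2 * h + w_mod r h) * K) with (c * (2 * h + w_mod r h)) by (unfold c; ring).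
  rewrite Rabs_right by (apply Rle_ge, Rmult_le_pos; lra).
  assert (c * (2 * h + w_mod r h) <= c * (eps / (c + 1))).
  { apply Rmult_le_compat_l; auto. replace (eps / (c + 1)) with (eps / (2 * (c + 1)) + eps / (2 * (c + 1))) by (field; lra). lra. }
  assert (c * (eps / (c + 1)) < eps).
  { apply Rmult_lt_reg_r with (c + 1). lra. replace (c * (eps / (c + 1)) * (c + 1)) with (c * eps) by (field; lra). nra. }
  lra.
Qed.


Lemma prod4_nonneg a b c d : 0 <= a -> 0 <= b -> 0 <= c -> 0 <= d -> 0 <= a * b * c * d.
Proof. intros. repeat apply Rmult_le_pos; auto. Qed.

Theorem theorem4p1 (q : R) (a r : R -> R) (K sigma : R)
  (Hq : 0 < q)
  (Ha_cont : forall t, 0 <= t -> continue_in a (fun u => 0 <= u) t)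
  (Ha_nonneg : forall t, 0 <= t -> 0 <= a t)
  (Hr_range : forall t, 0 <= t -> 0 <= r t <= q)
  (Hq_sup : is_lub (fun y => exists t, 0 <= t /\ y = r t) q)
  (A1 : UAS a r q)
  (A2 : exists M, forall t, 0 <= t -> Rabs (a t) <= M)
  (A3 : forall eps, 0 < eps -> exists delta, 0 < delta /\
          forall t1 t2, 0 <= t1 -> 0 <= t2 -> Rabs (t2 - t1) < delta ->
            Rabs (r t2 - r t1) < eps)
  (HK : 0 < K) (Hsigma : 0 < sigma)
  (HU : forall s phi x, 0 <= s -> cont_on_q q phi -> is_sol a r q s phi x ->
          forall t, s <= t -> Rabs (x t) <= K * normq q phi * exp (- sigma * (t - s))) :
  let t0 := 3 * q + w_mod r q in
  Un_cv (fun k => K1 a r K (q / INR (S k))) 0 /\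
  exists M1, 0 < M1 /\
    forall k : nat, (1 <= k)%nat ->
      let h := q / INR k in
      K1 a r K h < sigma ->
      exists eta, 0 < eta /\
        forall phi x z, cont_on_q q phi -> is_sol a r q 0 phi x ->
          is_scheme a r q k phi z ->
          forall t, t0 <= t ->
            Rabs (x t - z t) <=
              (K * sup_on (fun s => x s - z s) (t0 - q) t0
               + K1 a r K h * M1 * normq q phi * t) * exp (- eta * (t - t0)).
Proof.
  intros t0. split. { apply part1; auto; lra. }
  set (a0 := a0_of a).
  assert (Ha0b : forall u, 0 <= u -> Rabs (a u) <= a0).
  { destruct A2 as [M HM]. intros u Hu. unfold a0, a0_of. apply lub_of_ge with M.
    exists u; split; auto. intros y [t [Ht ->]]; auto. }
  assert (Ha0 : 0 <= a0) by (pose proof (Ha0b 0 ltac:(lra)); pose proof (Rabs_pos (a 0)); lra).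
  assert (Hac : forall u, 0 < u -> continuity_pt a u).
  { intros u Hu. apply cw_interior with 0; auto. apply Ha_cont; lra. }
  assert (Hrc : forall u, 0 < u -> continuity_pt r u) by (intros; apply ucont_cpt; auto).
  assert (Hex : forall s psi, 0 < s -> cont_on_q q psi -> exists y, is_sol a r q s psi y).
  { intros s psi Hs Hpsi. apply (existence a r q a0 s psi); auto. }
  assert (HK1 : 1 <= K).
  { destruct (Hex 1 (fun _ => 1)) as [y Hy]. lra.
    { intros th _. apply cpt_cw. apply continuity_pt_const. intros ? ?; auto. }
    pose proof (HU 1 (fun _ => 1) y ltac:(lra)) as H.
    assert (normq q (fun _ => 1) <= 1).
    { unfold normq, sup_on. apply lub_of_le. exists (Rabs 1), 0; split; auto; lra.
      intros y0 [s0 [_ ->]]. rewrite Rabs_R1; lra. }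
    destruct Hy as [Hy1 Hy2]. specialize (H ltac:(intros th _; apply cpt_cw, continuity_pt_const; intros ? ?; auto)).
    specialize (H ltac:(split; auto) 1 ltac:(lra)).
    specialize (Hy1 0 ltac:(lra)). rewrite Rplus_0_r in Hy1. rewrite Hy1, Rabs_R1, Rminus_diag, Rmult_0_r, exp_0 in H.
    assert (K * normq q (fun _ => 1) <= K * 1) by (apply Rmult_le_compat_l; lra). lra. }
  set (W := 5 * q).
  assert (Hwq : 0 <= w_mod r q) by (apply (w_nonneg r q); auto; lra).
  set (Cz := exp (a0 * (t0 + q))).
  set (C2 := (K + Cz * exp (sigma * t0)) * exp (sigma * W)).
  set (M1 := 4 * C2 * exp (- sigma * t0) + 1).
  assert (HCz : 1 <= Cz) by (unfold Cz; rewrite <- exp_0; apply exp_le; unfold t0; nra).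
  assert (HC2 : 0 <= C2).
  { unfold C2. pose proof (exp_pos (sigma * t0)). pose proof (exp_pos (sigma * W)). apply Rmult_le_pos; nra. }
  assert (HM1 : 0 < M1) by (unfold M1; pose proof (exp_pos (- sigma * t0)); nra).
  exists M1. split; auto.
  intros k Hk. cbv zeta. intros HK1s.
  pose proof (INR_k_pos k Hk) as Hk1.
  set (h := q / INR k) in *.
  assert (Hh : 0 < h) by (unfold h; apply Rdiv_lt_0_compat; lra).
  assert (Hhq : h <= q). { unfold h. apply Rmult_le_reg_r with (INR k); [lra|].
    replace (q / INR k * INR k) with q by (field; lra). nra. }
  set (K1v := K1 a r K h) in *.
  set (wh := w_mod r h).
  assert (Hwh : 0 <= wh) by (apply (w_nonneg r q); auto; lra).
  set (Kf := a0 * a0 * (2 * h + wh)).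
  assert (HKf : K1v = Kf * K) by (unfold K1v, K1, Kf, wh; fold a0; ring).
  assert (HKf0 : 0 <= Kf) by (unfold Kf; apply Rmult_le_pos; nra).
  assert (HK1v0 : 0 <= K1v) by (rewrite HKf; nra).
  assert (HKfle : Kf <= K1v) by (rewrite HKf; nra).
  set (X := a0 + Kf).
  destruct (params sigma K1v X W q Hsigma (conj HK1v0 HK1s)) as
    [dl [et [Hdl [Hdlq [HdlX [Het [Hets [Hetdl HLam]]]]]]]]; try (unfold X, W; lra); auto.
  exists et. split; auto.
  intros phi x z Hphi Hx Hz t Ht.
  set (Phi := normq q phi).
  assert (HPhi : forall th, - q <= th <= 0 -> Rabs (phi th) <= Phi).
  { destruct (cont_max phi (-q) 0 ltac:(lra) Hphi) as [u0 [Hu0 HM]].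
    intros th Hth. unfold Phi, normq, sup_on. apply lub_of_ge with (Rabs (phi u0)).
    exists th; split; auto. intros y [s0 [Hs0 ->]]. auto. }
  assert (HPhi0 : 0 <= Phi) by (pose proof (HPhi 0 ltac:(lra)); pose proof (Rabs_pos (phi 0)); lra).
  set (E := fun u => x u - z u).
  set (N0 := sup_on E (t0 - q) t0).
  set (B := fun u => (K * N0 + K1v * M1 * Phi * u) * exp (- et * (u - t0))).
  change (Rabs (E t) <= B t).
  assert (Ht0 : 3 * q <= t0) by (unfold t0; lra).
  assert (Hxd : forall u, 0 < u -> derivable_pt_lim x u (- (a u * x (u - r u)))).
  { destruct Hx as [_ [_ Hd]]. auto. }
  assert (Hxc : forall u, 0 < u -> continuity_pt x u) by (intros; eapply der_cpt; eauto).
  assert (Hzc : forall u, 0 < u -> continuity_pt z u).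
  { intros u Hu. apply cw_interior with 0; auto. destruct Hz as [_ [Hc _]]. apply Hc; lra. }
  assert (HEc : forall u, 0 < u -> continuity_pt E u).
  { intros u Hu. apply (continuity_pt_minus x z); auto. }
  assert (Hxb : forall u, 0 <= u -> Rabs (x u) <= K * Phi * exp (- sigma * u)).
  { intros u Hu. pose proof (HU 0 phi x ltac:(lra) Hphi Hx u Hu). rewrite Rminus_0_r in H. exact H. }
  assert (Hzg : forall u, 0 <= u <= t0 -> Rabs (z u) <= Phi * Cz).
  { intros u Hu. eapply Rle_trans. apply (z_grow a r q k phi z a0 Phi); auto; lra.
    apply Rmult_le_compat_l; auto. unfold Cz. apply exp_le. fold h. nra. }
  assert (HN0 : forall u, t0 - q <= u <= t0 -> Rabs (E u) <= N0).
  { destruct (cont_max E (t0 - q) t0) as [u0 [Hu0 HM]]. lra.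
    { intros u Hu. apply cpt_cw. apply HEc. lra. }
    intros u Hu. unfold N0, sup_on. apply lub_of_ge with (Rabs (E u0)).
    exists u; split; auto. intros y [s0 [Hs0 ->]]. auto. }
  assert (HN00 : 0 <= N0) by (pose proof (HN0 t0 ltac:(lra)); pose proof (Rabs_pos (E t0)); lra).
  assert (HB0 : forall u, 0 <= u -> 0 <= B u).
  { intros u Hu. unfold B. apply Rmult_le_pos. 2: left; apply exp_pos.
    assert (0 <= K1v * M1 * Phi * u) by (apply prod4_nonneg; lra).
    assert (0 <= K * N0) by (apply Rmult_le_pos; lra). lra. }
  assert (Bwin : forall g s0, t0 <= g <= s0 -> s0 - g <= W -> B g <= exp (et * W) * B s0).
  { intros g s0 Hg Hw. unfold B.
    assert (K * N0 + K1v * M1 * Phi * g <= K * N0 + K1v * M1 * Phi * s0).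
    { assert (0 <= K1v * M1 * Phi) by (apply Rmult_le_pos; [apply Rmult_le_pos|]; lra).
      assert (K1v * M1 * Phi * g <= K1v * M1 * Phi * s0) by (apply Rmult_le_compat_l; lra). lra. }
    assert (exp (- et * (g - t0)) <= exp (et * W) * exp (- et * (s0 - t0))).
    { rewrite <- exp_plus. apply exp_le. nra. }
    assert (0 <= K * N0 + K1v * M1 * Phi * g).
    { assert (0 <= K1v * M1 * Phi * g) by (apply prod4_nonneg; lra).
      assert (0 <= K * N0) by (apply Rmult_le_pos; lra). lra. }
    pose proof (exp_pos (- et * (g - t0))). pose proof (exp_pos (- et * (s0 - t0))). pose proof (exp_pos (et * W)).
    apply Rle_trans with ((K * N0 + K1v * M1 * Phi * s0) * exp (- et * (g - t0))).
    apply Rmult_le_compat_r; lra.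
    replace (exp (et * W) * ((K * N0 + K1v * M1 * Phi * s0) * exp (- et * (s0 - t0)))) with
      ((K * N0 + K1v * M1 * Phi * s0) * (exp (et * W) * exp (- et * (s0 - t0)))) by ring.
    apply Rmult_le_compat_l; lra. }
  assert (Bstep : forall s0 d, t0 <= s0 -> 0 < d <= dl ->
     exp (- sigma * d) * B s0 + d * (K1v / (1 - dl * X)) * (C2 * Phi * exp (- sigma * s0) + exp (et * W) * B s0)
       <= B (s0 + d)).
  { intros s0 d Hs0 Hd. unfold B.
    set (A := K * N0). set (P := K1v * M1 * Phi). set (e0 := exp (- et * (s0 - t0))).
    set (Lam := K1v / (1 - dl * X) * exp (et * W)).
    assert (HA : 0 <= A) by (unfold A; apply Rmult_le_pos; lra).
    assert (HP : 0 <= P) by (unfold P; apply Rmult_le_pos; [apply Rmult_le_pos|]; lra).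
    assert (He0 : 0 < e0) by apply exp_pos.
    assert (Hc1 : 0 < 1 - dl * X) by lra.
    assert (Hc : K1v / (1 - dl * X) <= 2 * K1v).
    { apply Rmult_le_reg_r with (1 - dl * X); auto. unfold Rdiv. rewrite Rmult_assoc, Rinv_l by lra. nra. }
    assert (HLam0 : 0 <= Lam) by (unfold Lam; apply Rmult_le_pos; [apply Rdiv_le_0_compat; lra| left; apply exp_pos]).
    pose proof (key_ineq sigma et Lam dl d ltac:(lra) Hd HLam0 HLam) as Key.
    assert (E1 : exp (- et * (s0 + d - t0)) = e0 * exp (- et * d)) by (unfold e0; rewrite <- exp_plus; f_equal; ring).
    rewrite E1.
    assert (Hs : exp (- sigma * s0) <= exp (- sigma * t0) * e0).
    { unfold e0. rewrite <- exp_plus. apply exp_le. nra. }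
    assert (Hed : 1/2 <= exp (- et * d)).
    { pose proof (exp_ineq1_le (- et * d)). assert (et * d <= et * dl) by (apply Rmult_le_compat_l; lra). lra. }
    assert (HM1' : 2 * (2 * C2 * exp (- sigma * t0)) <= M1) by (unfold M1; lra).
    pose proof (exp_pos (- sigma * t0)). pose proof (exp_pos (- sigma * s0)).
    assert (Part : d * (K1v / (1 - dl * X)) * (C2 * Phi * exp (- sigma * s0)) <= P * d * (e0 * exp (- et * d))).
    { apply Rle_trans with (d * (2 * K1v) * (C2 * Phi * (exp (- sigma * t0) * e0))).
      { apply Rmult_le_compat. apply Rmult_le_pos; [lra| apply Rdiv_le_0_compat; lra].
        apply Rmult_le_pos; [apply Rmult_le_pos|]; lra.
        apply Rmult_le_compat_l; lra. apply Rmult_le_compat_l. apply Rmult_le_pos; lra. auto. }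
      unfold P.
      replace (d * (2 * K1v) * (C2 * Phi * (exp (- sigma * t0) * e0))) with
        ((K1v * Phi * d * e0) * (2 * C2 * exp (- sigma * t0))) by ring.
      replace (K1v * M1 * Phi * d * (e0 * exp (- et * d))) with
        ((K1v * Phi * d * e0) * (M1 * exp (- et * d))) by ring.
      apply Rmult_le_compat_l. apply prod4_nonneg; lra.
      assert (M1 * (1/2) <= M1 * exp (- et * d)) by (apply Rmult_le_compat_l; lra). lra. }
    assert (Main : (exp (- sigma * d) + d * Lam) * ((A + P * s0) * e0) <= exp (- et * d) * ((A + P * s0) * e0)).
    { apply Rmult_le_compat_r; auto. apply Rmult_le_pos. assert (0 <= P * s0) by (apply Rmult_le_pos; lra). lra. lra. }
    unfold Lam in Main.
    replace ((A + P * (s0 + d)) * (e0 * exp (- et * d))) with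
      (exp (- et * d) * ((A + P * s0) * e0) + P * d * (e0 * exp (- et * d))) by ring.
    replace (exp (- sigma * d) * ((A + P * s0) * e0) +
       d * (K1v / (1 - dl * X)) * (C2 * Phi * exp (- sigma * s0) + exp (et * W) * ((A + P * s0) * e0))) with
      ((exp (- sigma * d) + d * (K1v / (1 - dl * X) * exp (et * W))) * ((A + P * s0) * e0)
       + d * (K1v / (1 - dl * X)) * (C2 * Phi * exp (- sigma * s0))) by ring.
    lra. }
  set (sn := fun n : nat => t0 + INR n * dl).
  assert (Pind : forall n, (forall u, t0 <= u <= sn n -> Rabs (E u) <= B u) /\
    exists y V, is_sol a r q (sn n) (fun th => E (sn n + th)) y /\ V <= B (sn n) /\
      (forall t, sn n <= t -> Rabs (y t) <= exp (- sigma * (t - sn n)) * V)).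
  { induction n as [|n IH].
    - assert (Hs0 : sn 0%nat = t0) by (unfold sn; simpl; ring). rewrite Hs0.
      set (seg0 := fun th => E (t0 + th)).
      assert (Hseg : cont_on_q q seg0).
      { intros th Hth. apply cw_mono with (fun th => (t0 - q) - t0 <= th <= t0 - t0). intros; lra.
        apply (shift_cw E (t0 - q) t0 t0 th). apply cpt_cw. apply HEc. lra. }
      destruct (Hex t0 seg0 ltac:(lra) Hseg) as [y Hy].
      assert (Hnq : normq q seg0 <= N0).
      { unfold normq, sup_on. apply lub_of_le. exists (Rabs (seg0 0)), 0; split; [lra|reflexivity].
        intros y0 [s1 [Hs1 ->]]. unfold seg0. apply HN0. lra. }
      assert (HBt0 : K * N0 <= B t0).
      { unfold B. rewrite Rminus_diag, Rmult_0_r, exp_0, Rmult_1_r.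
        assert (0 <= K1v * M1 * Phi * t0) by (apply prod4_nonneg; lra). lra. }
      assert (Hyb : forall t, t0 <= t -> Rabs (y t) <= exp (- sigma * (t - t0)) * (K * normq q seg0)).
      { intros t1 Ht1. pose proof (HU t0 seg0 y ltac:(lra) Hseg Hy t1 Ht1). lra. }
      split.
      + intros u Hu. assert (u = t0) by lra. subst u.
        destruct Hy as [Hy1 _]. specialize (Hy1 0 ltac:(lra)). unfold seg0 in Hy1. rewrite Rplus_0_r in Hy1.
        change (Rabs (E t0) <= B t0). rewrite <- Hy1. eapply Rle_trans. apply Hyb. lra.
        rewrite Rminus_diag, Rmult_0_r, exp_0, Rmult_1_l.
        assert (K * normq q seg0 <= K * N0) by (apply Rmult_le_compat_l; lra). lra.
      + exists y, (K * normq q seg0). split; [exact Hy|]. split; [|exact Hyb].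
        assert (K * normq q seg0 <= K * N0) by (apply Rmult_le_compat_l; lra). lra.
    - destruct IH as [IHB [y [V [Hy [HV Hyb]]]]].
      set (s := sn n) in *. set (s' := sn (S n)).
      assert (Hss : s' = s + dl) by (unfold s', s, sn; rewrite S_INR; ring).
      assert (Hs0 : t0 <= s) by (unfold s, sn; pose proof (pos_INR n); nra).
      set (wv := fun u => E u - y u).
      assert (Hyeq : forall v, s - q <= v <= s -> y v = E v).
      { intros v Hv. destruct Hy as [Hy1 _]. specialize (Hy1 (v - s) ltac:(lra)).
        replace (s + (v - s)) with v in Hy1 by ring. exact Hy1. }
      assert (Hwz : forall v, s - q <= v <= s -> wv v = 0).
      { intros v Hv. unfold wv. rewrite Hyeq by auto. ring. }
      assert (Hyd : forall u, s < u -> derivable_pt_lim y u (- (a u * y (u - r u)))).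
      { destruct Hy as [_ [_ Hd]]. auto. }
      assert (Hwc : forall u, s <= u <= s' -> continue_in wv (fun v => s <= v <= s') u).
      { intros u Hu. apply cw_minus.
        - apply cpt_cw. apply HEc. lra.
        - destruct (Req_dec u s) as [Eu|Eu].
          + rewrite Eu. apply cw_mono with (fun v => s <= v). intros; lra. destruct Hy as [_ [Hc _]]. exact Hc.
          + apply cpt_cw. eapply der_cpt. apply Hyd. lra. }
      destruct (cont_max wv s s' ltac:(lra) Hwc) as [us [Hus Hmax]].
      set (m := Rabs (wv us)).
      assert (Hm0 : 0 <= m) by apply Rabs_pos.
      assert (Hwm : forall v, s - q <= v <= s' -> Rabs (wv v) <= m).
      { intros v Hv. destruct (Rle_dec v s). rewrite Hwz by lra. rewrite Rabs_R0; lra. apply Hmax; lra. }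
      assert (HV0 : 0 <= V).
      { pose proof (Hyb s (Rle_refl s)) as H. rewrite Rminus_diag, Rmult_0_r, exp_0 in H.
        pose proof (Rabs_pos (y s)); lra. }
      assert (HBs : 0 <= B s) by (apply HB0; lra).
      assert (HeW : 1 <= exp (et * W)) by (rewrite <- exp_0; apply exp_le; unfold W; nra).
      set (Z0 := C2 * Phi * exp (- sigma * s) + exp (et * W) * B s).
      assert (HZ0 : 0 <= Z0).
      { unfold Z0. pose proof (exp_pos (- sigma * s)).
        assert (0 <= C2 * Phi * exp (- sigma * s)) by (apply Rmult_le_pos; [apply Rmult_le_pos|]; lra). nra. }
      assert (HCzC2 : s < t0 + W -> Phi * Cz <= C2 * Phi * exp (- sigma * s)).
      { intros Hsw. unfold C2.
        assert (Cz <= Cz * exp (sigma * t0) * exp (sigma * W) * exp (- sigma * s)).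
        { rewrite !Rmult_assoc, <- !exp_plus. rewrite <- (Rmult_1_r Cz) at 1. apply Rmult_le_compat_l. lra.
          rewrite <- exp_0. apply exp_le. nra. }
        assert (0 <= K * exp (sigma * W) * exp (- sigma * s)).
        { apply Rmult_le_pos; [apply Rmult_le_pos|]; try lra; left; apply exp_pos. }
        assert (Phi * Cz <= Phi * (Cz * exp (sigma * t0) * exp (sigma * W) * exp (- sigma * s))) by (apply Rmult_le_compat_l; lra).
        assert (Phi * (K * exp (sigma * W) * exp (- sigma * s)) >= 0) by (apply Rle_ge, Rmult_le_pos; lra).
        replace ((K + Cz * exp (sigma * t0)) * exp (sigma * W) * Phi * exp (- sigma * s)) with
          (Phi * (K * exp (sigma * W) * exp (- sigma * s)) + Phi * (Cz * exp (sigma * t0) * exp (sigma * W) * exp (- sigma * s))) by ring.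
        lra. }
      assert (HxC2 : forall g, s - W <= g -> K * Phi * exp (- sigma * g) <= C2 * Phi * exp (- sigma * s)).
      { intros g Hg. unfold C2.
        assert (exp (- sigma * g) <= exp (sigma * W) * exp (- sigma * s)) by (rewrite <- exp_plus; apply exp_le; nra).
        assert (0 <= Cz * exp (sigma * t0) * exp (sigma * W) * Phi * exp (- sigma * s)).
        { repeat apply Rmult_le_pos; try lra; left; apply exp_pos. }
        assert (K * Phi * exp (- sigma * g) <= K * Phi * (exp (sigma * W) * exp (- sigma * s))).
        { apply Rmult_le_compat_l; auto. apply Rmult_le_pos; lra. }
        replace ((K + Cz * exp (sigma * t0)) * exp (sigma * W) * Phi * exp (- sigma * s)) with
          (K * Phi * (exp (sigma * W) * exp (- sigma * s)) + Cz * exp (sigma * t0) * exp (sigma * W) * Phi * exp (- sigma * s)) by ring.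
        lra. }
      assert (Hzw : forall v j, s < v <= s' -> INR j * h < v -> v - q - h < INR (S j) * h ->
                 Rabs (z (gp r h j)) <= Z0 + m).
      { intros v j Hv Hj1 Hj2.
        destruct (gp_facts r q k j Hq Hk Hr_range) as [F1 [F2 [F3 F4]]]. fold h in F1, F2, F3, F4.
        assert (Hjh : 0 <= INR j * h) by (apply Rmult_le_pos; [apply pos_INR|lra]).
        pose proof (Hr_range _ Hjh) as Hrj. rewrite S_INR in Hj2.
        set (g := gp r h j) in *.
        assert (Hgl : s - W < g) by (unfold W; lra).
        assert (Hgu : g < v) by lra.
        destruct (Rlt_dec g 0) as [Hg0|Hg0].
        - destruct (F4 Hg0) as [nn [Hnn Egg]]. fold h in Egg.
          destruct Hz as [Hz1 _]. specialize (Hz1 nn Hnn). fold h in Hz1. rewrite Egg, Hz1, <- Egg.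
          eapply Rle_trans. apply HPhi. lra.
          assert (Phi <= Phi * Cz) by nra. assert (Phi * Cz <= C2 * Phi * exp (- sigma * s)) by (apply HCzC2; lra).
          unfold Z0. nra.
        - destruct (Rlt_dec g t0) as [Hgt|Hgt].
          + eapply Rle_trans. apply Hzg. lra.
            assert (Phi * Cz <= C2 * Phi * exp (- sigma * s)) by (apply HCzC2; lra).
            assert (0 <= exp (et * W) * B s) by nra. unfold Z0. lra.
          + destruct (Rle_dec g s) as [Hgs|Hgs].
            * replace (z g) with (x g - E g) by (unfold E; ring).
              eapply Rle_trans. apply Rabs_triang. rewrite Rabs_Ropp.
              pose proof (Hxb g ltac:(lra)). pose proof (HxC2 g ltac:(lra)).
              pose proof (IHB g ltac:(lra)). pose proof (Bwin g s ltac:(lra) ltac:(lra)).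
              unfold Z0. lra.
            * replace (z g) with (x g - y g - wv g) by (unfold wv, E; ring).
              eapply Rle_trans. apply Rabs_triang. rewrite Rabs_Ropp.
              eapply Rle_trans. apply Rplus_le_compat_r. apply Rabs_triang. rewrite Rabs_Ropp.
              pose proof (Hxb g ltac:(lra)). pose proof (HxC2 g ltac:(lra)).
              pose proof (Hyb g ltac:(lra)). pose proof (Hwm g ltac:(lra)).
              assert (exp (- sigma * (g - s)) * V <= V).
              { rewrite <- (Rmult_1_l V) at 2. apply Rmult_le_compat_r; auto.
                rewrite <- exp_0. apply exp_le. nra. }
              assert (V <= exp (et * W) * B s) by nra.
              unfold Z0. lra. }
      assert (Hwd : forall u, s < u < s' -> (forall j : nat, u <> INR j * h) ->
         exists d, derivable_pt_lim wv u d /\ Rabs d <= a0 * m + Kf * (Z0 + m)).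
      { intros u Hu Hng. destruct (zder a r q k phi z u Hq Hk Hz ltac:(lra) Hng) as [i [Hi Hzd]].
        fold h in Hi, Hzd.
        exists (- (a u * wv (u - r u)) + a u * (z (gp r h i) - z (u - r u))). split.
        - assert (D1 := derivable_pt_lim_minus _ _ _ _ _ (Hxd u ltac:(lra)) Hzd).
          assert (D2 := derivable_pt_lim_minus _ _ _ _ _ D1 (Hyd u ltac:(lra))).
          unfold wv, E.
          replace (- (a u * (x (u - r u) - z (u - r u) - y (u - r u))) + a u * (z (gp r h i) - z (u - r u)))
            with (- (a u * x (u - r u)) - - (a u * z (gp r h i)) - - (a u * y (u - r u))) by ring.
          exact D2.
        - pose proof (Hr_range u ltac:(lra)) as Hru.
          assert (Hf : Rabs (z (gp r h i) - z (u - r u)) <= a0 * (Z0 + m) * (2 * h + wh)).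
          { apply (forcing a r q k phi z a0 wh u i (Z0 + m)); auto.
            - intros t1 t2 H1 H2 H3. apply (w_bound r q); auto.
            - lra.
            - intros j Hj1 Hj2. apply (Hzw u j); auto; lra. }
          assert (Hw1 : Rabs (wv (u - r u)) <= m) by (apply Hwm; lra).
          eapply Rle_trans. apply Rabs_triang. rewrite Rabs_Ropp, !Rabs_mult.
          pose proof (Ha0b u ltac:(lra)).
          assert (Rabs (a u) * Rabs (wv (u - r u)) <= a0 * m) by (apply Rmult_le_compat; auto; apply Rabs_pos).
          assert (Rabs (a u) * Rabs (z (gp r h i) - z (u - r u)) <= a0 * (a0 * (Z0 + m) * (2 * h + wh)))
            by (apply Rmult_le_compat; auto; apply Rabs_pos).
          replace (Kf * (Z0 + m)) with (a0 * (a0 * (Z0 + m) * (2 * h + wh))) by (unfold Kf; ring). lra. }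
      assert (Hwb : forall u, s <= u <= s' -> Rabs (wv u) <= (a0 * m + Kf * (Z0 + m)) * (u - s)).
      { intros u Hu. replace (wv u) with (wv u - wv s) by (rewrite (Hwz s); [ring|lra]).
        apply mvt_grid with h; auto. lra.
        intros v Hv. apply cw_mono with (fun v => s <= v <= s'). intros; lra. apply Hwc; lra.
        intros v Hv Hng. apply Hwd; auto; lra. }
      set (cp := / (1 - dl * X)).
      assert (Hcp1 : 0 < 1 - dl * X) by lra.
      assert (Hcp : 0 < cp) by (unfold cp; apply Rinv_0_lt_compat; lra).
      assert (Hcpe : cp * (1 - dl * X) = 1) by (unfold cp; field; lra).
      assert (Hmb : m <= dl * Kf * Z0 * cp).
      { pose proof (Hwb us Hus) as H. fold m in H.
        assert ((a0 * m + Kf * (Z0 + m)) * (us - s) <= (a0 * m + Kf * (Z0 + m)) * dl).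
        { apply Rmult_le_compat_l. assert (0 <= Kf * (Z0 + m)) by (apply Rmult_le_pos; lra). nra. lra. }
        assert (m * (1 - dl * X) <= dl * Kf * Z0) by (unfold X; nra).
        replace m with (m * (1 - dl * X) * cp) by (rewrite Rmult_assoc, (Rmult_comm _ cp), Hcpe; ring).
        apply Rmult_le_compat_r; lra. }
      assert (HLb : a0 * m + Kf * (Z0 + m) <= K1v * cp * Z0).
      { assert (a0 * m + Kf * (Z0 + m) = X * m + Kf * Z0) by (unfold X; ring).
        assert (X * m <= X * (dl * Kf * Z0 * cp)) by (apply Rmult_le_compat_l; unfold X; lra).
        assert (X * (dl * Kf * Z0 * cp) + Kf * Z0 = Kf * Z0 * cp).
        { unfold cp. field. lra. }
        assert (Kf * Z0 * cp <= K1v * cp * Z0).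
        { replace (K1v * cp * Z0) with (K1v * (Z0 * cp)) by ring. replace (Kf * Z0 * cp) with (Kf * (Z0 * cp)) by ring.
          apply Rmult_le_compat_r; auto. apply Rmult_le_pos; lra. }
        lra. }
      assert (Hwb2 : forall u, s <= u <= s' -> Rabs (wv u) <= (u - s) * (K1v / (1 - dl * X)) * Z0).
      { intros u Hu. eapply Rle_trans. apply Hwb; auto.
        replace ((u - s) * (K1v / (1 - dl * X)) * Z0) with ((K1v * cp * Z0) * (u - s)) by (unfold cp, Rdiv; ring).
        apply Rmult_le_compat_r; lra. }
      assert (HKm : K * m <= dl * (K1v / (1 - dl * X)) * Z0).
      { replace (dl * (K1v / (1 - dl * X)) * Z0) with (K * (dl * Kf * Z0 * cp)) by (rewrite HKf; unfold cp, Rdiv; ring).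
        apply Rmult_le_compat_l; lra. }
      split.
      + intros u Hu. destruct (Rle_dec u s) as [Hu1|Hu1]. { apply IHB; lra. }
        assert (Hu2 : u <= s') by (fold s' in Hu; lra).
        replace (E u) with (y u + wv u) by (unfold wv; ring).
        eapply Rle_trans. apply Rabs_triang.
        pose proof (Hyb u ltac:(lra)). pose proof (Hwb2 u ltac:(lra)).
        pose proof (Bstep s (u - s) Hs0 ltac:(lra)) as HBs2.
        replace (s + (u - s)) with u in HBs2 by ring.
        assert (exp (- sigma * (u - s)) * V <= exp (- sigma * (u - s)) * B s) by (apply Rmult_le_compat_l; [left; apply exp_pos|auto]).
        unfold Z0 in *. lra.
      + set (seg := fun th => wv (s' + th)).
        assert (Hsegc : cont_on_q q seg).
        { intros th Hth. apply cw_mono with (fun th => (s' - q) - s' <= th <= s' - s'). intros; lra.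
          apply (shift_cw wv (s' - q) s' s' th). apply glue0 with s. lra.
          intros v Hv. apply Hwz; lra. exact Hwc. lra. }
        destruct (Hex s' seg ltac:(lra) Hsegc) as [D HD].
        assert (Hnseg : normq q seg <= m).
        { unfold normq, sup_on. apply lub_of_le. exists (Rabs (seg 0)), 0; split; [lra|reflexivity].
          intros y0 [s1 [Hs1 ->]]. unfold seg. apply Hwm. lra. }
        assert (HDb : forall t1, s' <= t1 -> Rabs (D t1) <= exp (- sigma * (t1 - s')) * (K * m)).
        { intros t1 Ht1. pose proof (HU s' seg D ltac:(lra) Hsegc HD t1 Ht1).
          assert (K * normq q seg <= K * m) by (apply Rmult_le_compat_l; lra).
          pose proof (exp_pos (- sigma * (t1 - s'))). nra. }
        exists (fun t1 => y t1 + D t1), (exp (- sigma * dl) * V + K * m).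
        split; [|split].
        * split; [|split].
          -- intros th Hth. destruct HD as [HD1 _]. rewrite (HD1 th Hth). unfold seg, wv. ring.
          -- apply cw_plus. apply cpt_cw. eapply der_cpt. apply Hyd. lra. destruct HD as [_ [HD2 _]]. exact HD2.
          -- intros t1 Ht1. destruct HD as [_ [_ HD3]].
             replace (- (a t1 * (y (t1 - r t1) + D (t1 - r t1)))) with
               (- (a t1 * y (t1 - r t1)) + - (a t1 * D (t1 - r t1))) by ring.
             apply derivable_pt_lim_plus. apply Hyd; lra. apply HD3; auto.
        * rewrite Hss. pose proof (Bstep s dl Hs0 ltac:(lra)) as HBs2.
          assert (exp (- sigma * dl) * V <= exp (- sigma * dl) * B s) by (apply Rmult_le_compat_l; [left; apply exp_pos|auto]).
          unfold Z0 in *. lra.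
        * intros t1 Ht1. eapply Rle_trans. apply Rabs_triang.
          pose proof (Hyb t1 ltac:(lra)). pose proof (HDb t1 Ht1).
          assert (exp (- sigma * (t1 - s)) = exp (- sigma * (t1 - s')) * exp (- sigma * dl))
            by (rewrite <- exp_plus; f_equal; rewrite Hss; ring).
          rewrite H1 in H. lra.
  }
  destruct (INR_archimed dl (t - t0) Hdl) as [n Hn].
  apply (proj1 (Pind n)). split; auto. unfold sn; lra.
Qed.
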